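(* For $i\in\{1,2\}$ let $\mathcal{P}_i=\mathrm{con}(\mathcal{C}_i)=\mathrm{gen}(\mathcal{G}_i)\subseteq\mathbb{R}^n$ be non-empty NNC polyhedra, with $\mathcal{C}_i$ finite constraint systems and $\mathcal{G}_i=(R_i,P_i,C_i)$ extended generator systems. Then $\mathcal{P}_1\uplus\mathcal{P}_2\neq\mathcal{P}_1\cup\mathcal{P}_2$ if and only if, for some $i,j\in\{1,2\}$ with $i\neq j$, there exists a generator $g_i$ of $\mathcal{G}_i$ that saturates a constraint $\beta_i\in\mathcal{C}_i$ violated by $\mathcal{P}_j$, and at least one of the following holds: (1) $g_i$ is a ray or a closure point of $\mathcal{G}_i$ (i.e., $g_i\in R_i$ or $g_i\in C_i$) that is not subsumed by $\mathcal{P}_j$; (2) $g_i$ is a point of $\mathcal{G}_i$ (i.e., $g_i\in P_i$), $\beta_i$ is non-strict, and $g_i\notin\mathbb{C}(\mathcal{P}_j)$; (3) $\beta_i$ is strict and is saturated by some point $\mathbf{p}\in(\mathcal{P}_1\uplus\mathcal{P}_2)\setminus\mathcal{P}_j$.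
   Context: A constraint is either a non-strict inequality $\langle\mathbf{a},\mathbf{x}\rangle\le b$ or a strict inequality $\langle\mathbf{a},\mathbf{x}\rangle<b$, with $\mathbf{a}\in\mathbb{R}^n\setminus\{\mathbf{0}\}$, $b\in\mathbb{R}$ (equalities being treated as pairs of non-strict inequalities). For a finite set $\mathcal{C}$ of constraints, $\mathrm{con}(\mathcal{C})$ is the set of points of $\mathbb{R}^n$ satisfying all of them; such sets are the NNC (not necessarily closed) polyhedra. An extended generator system is a triple $(R,P,C)$ of finite subsets of $\mathbb{R}^n$, $R=\{\mathbf{r}_k\}$, $P=\{\mathbf{p}_k\}$, $C=\{\mathbf{c}_k\}$, with $\mathbf{0}\notin R$, and $\mathrm{gen}((R,P,C))=\{\sum\rho_k\mathbf{r}_k+\sum\sigma_k\mathbf{p}_k+\sum\tau_k\mathbf{c}_k : \rho_k,\sigma_k,\tau_k\ge0,\ (\sigma_k)_k\neq\mathbf{0},\ \sum\sigma_k+\sum\tau_k=1\}$; elements of $R$, $P$, $C$ are called rays, points and closure points of the system, respectively. $\mathbb{C}(S)$ denotes the topological closure of $S$. For a non-empty NNC polyhedron $\mathcal{P}$, a vector $\mathbf{r}\neq\mathbf{0}$ is a ray of $\mathcal{P}$ if $\mathbf{p}+\rho\mathbf{r}\in\mathcal{P}$ for all $\mathbf{p}\in\mathcal{P}$, $\rho\ge0$; a vector $\mathbf{c}$ is a closure point of $\mathcal{P}$ if $\mathbf{c}\in\mathbb{C}(\mathcal{P})$. A polyhedron $\mathcal{P}$ subsumes a point (resp. ray, closure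 point) $\mathbf{v}$ if $\mathbf{v}$ is a point in $\mathcal{P}$ (resp. a ray of $\mathcal{P}$, a closure point of $\mathcal{P}$). A point or closure point $\mathbf{p}$ saturates a constraint $\langle\mathbf{a},\mathbf{x}\rangle\bowtie b$ ($\bowtie\in\{<,\le\}$) if $\langle\mathbf{a},\mathbf{p}\rangle=b$; a ray $\mathbf{r}$ saturates it if $\langle\mathbf{a},\mathbf{r}\rangle=0$. A polyhedron violates a constraint if some point of it does not satisfy it. $\mathcal{P}_1\uplus\mathcal{P}_2$ is the smallest NNC polyhedron containing $\mathcal{P}_1\cup\mathcal{P}_2$; if $\mathcal{P}_i=\mathrm{gen}((R_i,P_i,C_i))$ then $\mathcal{P}_1\uplus\mathcal{P}_2=\mathrm{gen}((R_1\cup R_2,P_1\cup P_2,C_1\cup C_2))$. *)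

(* Defs.v *)
From HB Require Import structures.
From mathcomp Require Import all_boot all_order all_algebra.
From mathcomp Require Import all_classical all_reals all_analysis.
Set Implicit Arguments. Unset Strict Implicit. Unset Printing Implicit Defensive.
Import Order.TTheory GRing.Theory Num.Theory.
Import numFieldNormedType.Exports.
Local Open Scope classical_set_scope.
Local Open Scope ring_scope.

Section NNC.
Variables (R : realType) (n : nat).
Notation vec := 'rV[R]_n.

Definition dotp (a x : vec) : R := \sum_(k < n) a 0 k * x 0 k.

(* a constraint (a, b, strict): <a,x> < b if strict, <a,x> <= b otherwise *)
Definition constraint : Type := (vec * R * bool)%type.
Definition ca (c : constraint) : vec := c.1.1.
Definition cb (c : constraint) : R := c.1.2.
Definition cstrict (c : constraint) : bool := c.2.

Definition wf_constraint (c : constraint) : Prop := ca c != 0.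

Definition sat_constraint (x : vec) (c : constraint) : Prop :=
  if cstrict c then dotp (ca c) x < cb c else dotp (ca c) x <= cb c.

Definition con (C : seq constraint) : set vec :=
  [set x | forall c, c \in C -> sat_constraint x c].

Definition is_NNC (Q : set vec) : Prop :=
  exists C : seq constraint, (forall c, c \in C -> wf_constraint c) /\ Q = con C.

Record gensys := Gensys { grays : seq vec; gpoints : seq vec; gcpoints : seq vec }.

Definition wf_gensys (G : gensys) : Prop := (0 : vec) \notin grays G.

Definition gen (G : gensys) : set vec :=
  [set x | exists (rho : 'I_(size (grays G)) -> R)
                  (sigma : 'I_(size (gpoints G)) -> R)
                  (tau : 'I_(size (gcpoints G)) -> R),
     [/\ (forall k, 0 <= rho k), (forall k, 0 <= sigma k) /\ (forall k, 0 <= tau k),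
         (exists k, sigma k != 0),
         \sum_k sigma k + \sum_k tau k = 1 &
         x = \sum_k rho k *: (grays G)`_k + \sum_k sigma k *: (gpoints G)`_k
             + \sum_k tau k *: (gcpoints G)`_k]].

Inductive gkind := GRay | GPoint | GClosure.

Definition in_gensys (G : gensys) (k : gkind) (g : vec) : bool :=
  match k with
  | GRay => g \in grays G
  | GPoint => g \in gpoints G
  | GClosure => g \in gcpoints G
  end.

Definition is_ray_of (Q : set vec) (r : vec) : Prop :=
  r != 0 /\ forall p rho, Q p -> 0 <= rho -> Q (p + rho *: r).

Definition is_closure_point_of (Q : set vec) (c : vec) : Prop := closure Q c.

Definition subsumes (Q : set vec) (k : gkind) (v : vec) : Prop :=
  match k with
  | GRay => is_ray_of Q v
  | GPoint => Q v
  | GClosure => is_closure_point_of Q v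
  end.

Definition saturates (k : gkind) (v : vec) (c : constraint) : Prop :=
  match k with
  | GRay => dotp (ca c) v = 0
  | GPoint | GClosure => dotp (ca c) v = cb c
  end.

Definition violates (Q : set vec) (c : constraint) : Prop :=
  exists p, Q p /\ ~ sat_constraint p c.

Definition poly_hull (P1 P2 : set vec) : set vec :=
  [set x | forall Q, is_NNC Q -> P1 `|` P2 `<=` Q -> Q x].

Definition hull_cond (Pi : set vec) (Ci : seq constraint) (Gi : gensys)
    (Pj : set vec) (H : set vec) : Prop :=
  exists (k : gkind) (g : vec) (beta : constraint),
    [/\ in_gensys Gi k g, beta \in Ci, saturates k g beta, violates Pj beta &
     [\/ ((k = GRay \/ k = GClosure) /\ ~ subsumes Pj k g),
         (k = GPoint /\ ~~ cstrict beta /\ ~ closure Pj g)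
       | (cstrict beta /\
          exists p, H p /\ ~ Pj p /\ dotp (ca beta) p = cb beta)]].

End NNC.

(* Main.v *)
Require Import Defs.
From HB Require Import structures.
From mathcomp Require Import all_boot all_order all_algebra.
From mathcomp Require Import all_classical all_reals all_analysis.
From mathcomp.algebra_tactics Require Import ring lra.
From mathcomp Require Import zify.
From Stdlib Require Import Lia.
Import Order.TTheory GRing.Theory Num.Theory.
Import numFieldNormedType.Exports.
Set Implicit Arguments. Unset Strict Implicit. Unset Printing Implicit Defensive.
Local Open Scope classical_set_scope.
Local Open Scope ring_scope.
Section FM.
Variables (R : realType) (n : nat).
Notation vec := 'rV[R]_n.

Lemma dotpD (a x y : vec) : dotp a (x + y) = dotp a x + dotp a y.
Proof. by rewrite /dotp -big_split /=; apply: eq_bigr => k _; rewrite mxE mulrDr. Qed.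
Lemma dotpZ (a x : vec) k : dotp a (k *: x) = k * dotp a x.
Proof. by rewrite /dotp mulr_sumr; apply: eq_bigr => i _; rewrite mxE mulrCA. Qed.
Lemma dotpDl (a a' x : vec) : dotp (a + a') x = dotp a x + dotp a' x.
Proof. by rewrite /dotp -big_split /=; apply: eq_bigr => k _; rewrite mxE mulrDl. Qed.
Lemma dotpZl (a x : vec) k : dotp (k *: a) x = k * dotp a x.
Proof. by rewrite /dotp mulr_sumr; apply: eq_bigr => i _; rewrite mxE mulrA. Qed.
Lemma dotp0 (a : vec) : dotp a 0 = 0.
Proof. by rewrite /dotp big1 // => i _; rewrite mxE mulr0. Qed.
Lemma dotp0l (x : vec) : dotp 0 x = 0.
Proof. by rewrite /dotp big1 // => i _; rewrite mxE mul0r. Qed.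
Lemma dotpN (a x : vec) : dotp a (- x) = - dotp a x.
Proof. by rewrite -scaleN1r dotpZ mulN1r. Qed.
Lemma dotpB (a x y : vec) : dotp a (x - y) = dotp a x - dotp a y.
Proof. by rewrite dotpD dotpN. Qed.
Lemma dotp_sum (a : vec) m p (F : nat -> vec) :
  dotp a (\sum_(m <= i < p) F i) = \sum_(m <= i < p) dotp a (F i).
Proof.
by apply: (big_morph (dotp a)); [exact: dotpD | exact: dotp0].
Qed.

Definition lc := (vec * (nat -> R) * R * bool)%type.
Definition lA (c : lc) : vec := c.1.1.1.
Definition lE (c : lc) : nat -> R := c.1.1.2.
Definition lB (c : lc) : R := c.1.2.
Definition lS (c : lc) : bool := c.2.
Definition lval m (x : vec) (z : nat -> R) (c : lc) :=
  dotp (lA c) x + \sum_(0 <= i < m) lE c i * z i.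
Definition satv (c : lc) (v : R) : Prop := if lS c then v < lB c else v <= lB c.
Definition satL m x z c := satv c (lval m x z c).
Definition upd (z : nat -> R) m t := fun i => if i == m then t else z i.

Lemma lval_ext m x z z' c : (forall i, (i < m)%N -> z i = z' i) ->
  lval m x z c = lval m x z' c.
Proof.
move=> H; rewrite /lval; congr (_ + _); apply: eq_big_nat => i /andP[_ lt].
by rewrite H.
Qed.

Lemma lval_upd m x z t c : lval m.+1 x (upd z m t) c = lval m x z c + lE c m * t.
Proof.
rewrite /lval big_nat_recr //= /upd eqxx addrA; congr (_ + _ + _).
by apply: eq_big_nat => i /andP[_ lt]; rewrite (ltn_eqF lt).
Qed.

Definition comb m (p q : lc) : lc :=
  ((- lE q m) *: lA p + lE p m *: lA q,
   fun i => - lE q m * lE p i + lE p m * lE q i,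
   - lE q m * lB p + lE p m * lB q, lS p || lS q).

Lemma lval_comb m x z p q :
  lval m x z (comb m p q) = - lE q m * lval m x z p + lE p m * lval m x z q.
Proof.
rewrite /lval /comb /lA /lE /= dotpDl !dotpZl !mulrDr -!addrA; congr (_ + _).
rewrite addrCA; congr (_ + _).
rewrite !mulr_sumr -big_split /=; apply: eq_bigr => i _.
by rewrite mulrDl !mulrA.
Qed.

Definition elim1 m (S : seq lc) : seq lc :=
  [seq c <- S | lE c m == 0] ++
  [seq comb m p q | p <- [seq c <- S | 0 < lE c m], q <- [seq c <- S | lE c m < 0]].

Lemma argmin_seq (T : eqType) (s : seq T) (f : T -> R) : s != [::] ->
  exists2 c, c \in s & forall d, d \in s -> f c <= f d.
Proof.
elim: s => // a s IH _; case: (eqVneq s [::]) => [->|sn].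
  by exists a; rewrite ?mem_seq1 ?inE // => d; rewrite inE => /eqP ->.
have [c cs Hc] := IH sn.
case: (leP (f a) (f c)) => H.
  exists a; first by rewrite inE eqxx.
  by move=> d; rewrite inE => /orP[/eqP->//|/Hc]; apply: le_trans.
exists c; first by rewrite inE cs orbT.
by move=> d; rewrite inE => /orP[/eqP->|/Hc//]; apply: ltW.
Qed.

Lemma argmax_seq (T : eqType) (s : seq T) (f : T -> R) : s != [::] ->
  exists2 c, c \in s & forall d, d \in s -> f d <= f c.
Proof.
move=> /(@argmin_seq _ _ (fun x => - f x)) [c cs Hc]; exists c => // d ds.
by rewrite -lerN2 Hc.
Qed.

Lemma satv_up (c : lc) v e t : 0 < e ->
  (if lS c then t < (lB c - v) / e else t <= (lB c - v) / e) -> satv c (v + e * t).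
Proof.
move=> e0; rewrite /satv; case: (lS c) => H.
  by rewrite -ltrBrDl mulrC -ltr_pdivlMr.
by rewrite -lerBrDl mulrC -ler_pdivlMr.
Qed.

Lemma satv_lo (c : lc) v e t : e < 0 ->
  (if lS c then (lB c - v) / e < t else (lB c - v) / e <= t) -> satv c (v + e * t).
Proof.
move=> e0; rewrite /satv; case: (lS c) => H.
  by rewrite -ltrBrDl mulrC -ltr_ndivrMr.
by rewrite -lerBrDl mulrC -ler_ndivrMr.
Qed.
Lemma satv_pair m (p q : lc) vp vq : 0 < lE p m -> lE q m < 0 ->
  satv (comb m p q) (- lE q m * vp + lE p m * vq) ->
  if lS p || lS q then (lB q - vq) / lE q m < (lB p - vp) / lE p m
  else (lB q - vq) / lE q m <= (lB p - vp) / lE p m.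
Proof.
rewrite /satv /comb /lB /lS /lE /= => ep eq.
set D := (- q.1.1.2 m * p.1.2 + p.1.1.2 m * q.1.2) - (- q.1.1.2 m * vp + p.1.1.2 m * vq).
have E : (p.1.2 - vp) / p.1.1.2 m - (q.1.2 - vq) / q.1.1.2 m = D / (p.1.1.2 m * - q.1.1.2 m).
  rewrite /D; field; apply/andP; split; rewrite ?oppr_eq0; apply/negP => /eqP H;
  by move: ep eq; rewrite H ltxx.
have pos : 0 < p.1.1.2 m * - q.1.1.2 m by rewrite mulr_gt0 // oppr_gt0.
case: (_ || _) => H.
  by rewrite -subr_gt0 E divr_gt0 // subr_gt0.
by rewrite -subr_ge0 E divr_ge0 // ?subr_ge0 // ltW.
Qed.

Lemma satv_comb m (p q : lc) vp vq t : 0 < lE p m -> lE q m < 0 ->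
  satv p (vp + lE p m * t) -> satv q (vq + lE q m * t) ->
  satv (comb m p q) (- lE q m * vp + lE p m * vq).
Proof.
rewrite /satv /comb /lB /lS /lE /= => ep eq.
set a := p.1.1.2 m; set b := q.1.1.2 m.
have E : - b * vp + a * vq = - b * (vp + a * t) + a * (vq + b * t) by ring.
rewrite E; have nb : 0 < - b by rewrite oppr_gt0.
case: p.2; case: q.2 => /= Hp Hq.
- by apply: ltrD; rewrite ltr_pM2l.
- by apply: ltr_leD; [rewrite ltr_pM2l | rewrite ler_pM2l].
- by apply: ler_ltD; [rewrite ler_pM2l | rewrite ltr_pM2l].
- by apply: lerD; rewrite ler_pM2l.
Qed.

Lemma elim1_correct m S x z :
  (forall c, c \in elim1 m S -> satL m x z c) <->
  exists t, forall c, c \in S -> satL m.+1 x (upd z m t) c.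
Proof.
rewrite /satL; split; last first.
  move=> [t Ht] c; rewrite mem_cat => /orP[|].
    rewrite mem_filter => /andP[/eqP e0 cS]; have := Ht c cS.
    by rewrite lval_upd e0 mul0r addr0.
  move/allpairsP => [[p q] /= [pS qS ->]].
  move: pS qS; rewrite !mem_filter => /andP[ep pS] /andP[eq qS].
  rewrite lval_comb; apply: (@satv_comb _ _ _ _ _ t) => //; by rewrite -lval_upd; apply: Ht.
move=> H.
set Ps := [seq c <- S | 0 < lE c m]; set Ng := [seq c <- S | lE c m < 0].
set v := fun c => lval m x z c.
set U := fun c => (lB c - v c) / lE c m.
have pair : forall p q, p \in Ps -> q \in Ng ->
    if lS p || lS q then U q < U p else U q <= U p.
  move=> p q pP qN; move: (pP) (qN); rewrite !mem_filter => /andP[ep _] /andP[eq _].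
  apply: satv_pair => //; rewrite -lval_comb; apply: H.
  by rewrite mem_cat; apply/orP; right; apply/allpairsP; exists (p, q).
suff [t [tP tN]] : exists t, (forall p, p \in Ps -> if lS p then t < U p else t <= U p) /\
                        (forall q, q \in Ng -> if lS q then U q < t else U q <= t).
  exists t => c cS; rewrite lval_upd.
  case: (ltgtP (lE c m) 0) => ec.
  - by apply: satv_lo => //; apply: tN; rewrite mem_filter ec.
  - by apply: satv_up => //; apply: tP; rewrite mem_filter ec.
  - rewrite ec mul0r addr0; apply: H; rewrite mem_cat mem_filter ec eqxx cS //.
case: (eqVneq Ps [::]) => Pn; case: (eqVneq Ng [::]) => Nn.
- by exists 0; rewrite Pn Nn.
- have [q qN Hq] := @argmax_seq _ _ U Nn.
  exists (U q + 1); rewrite Pn; split => // q' /Hq h.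
  by case: (lS q'); lra.
- have [p pP Hp] := @argmin_seq _ _ U Pn.
  exists (U p - 1); rewrite Nn; split => // p' /Hp h.
  by case: (lS p'); lra.
- have [q qN Hq] := @argmax_seq _ _ U Nn.
  have [p pP Hp] := @argmin_seq _ _ U Pn.
  exists ((U q + U p) / 2); split.
  + move=> p' pP'; have h1 := Hp p' pP'; have := pair p' q pP' qN.
    by case: (lS p') => /=; [|case: (lS q)] => h2; lra.
  + move=> q' qN'; have h1 := Hq q' qN'; have := pair p q' pP qN'.
    by case: (lS q'); rewrite ?orbT; [|rewrite orbF; case: (lS p)] => h2; lra.
Qed.

Fixpoint elimAll m (S : seq lc) : seq lc :=
  if m is m'.+1 then elimAll m' (elim1 m' S) else S.

Lemma elimAll_correct m S x :
  (exists z, forall c, c \in S -> satL m x z c) <->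
  (forall c, c \in elimAll m S -> satL 0 x (fun=> 0) c).
Proof.
elim: m S => [|m IH] S /=.
  split; last by move=> H; exists (fun=> 0).
  move=> [z Hz] c cS; have := Hz c cS.
  by rewrite /satL /lval !big_geq.
rewrite -IH; split.
  move=> [z Hz]; exists z; apply/elim1_correct; exists (z m) => c cS.
  rewrite /satL (@lval_ext _ _ _ z); first exact: Hz.
  by move=> i _; rewrite /upd; case: eqP => // ->.
move=> [z /elim1_correct [t Ht]]; by exists (upd z m t).
Qed.
End FM.
Section G.
Variables (R : realType) (n : nat).
Notation vec := 'rV[R]_n.
Implicit Types (L : seq (vec * gkind)).

Definition gk := (vec * gkind)%type.
Definition dgk : gk := (0, GRay).
Definition ipt (k : gkind) : R := if k is GPoint then 1 else 0.
Definition ipc (k : gkind) : R := if k is GRay then 0 else 1.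

Definition gen' L : set vec := [set x | exists z : nat -> R,
  [/\ forall i, (i < size L)%N -> 0 <= z i,
      0 < \sum_(0 <= i < size L) ipt (nth dgk L i).2 * z i,
      \sum_(0 <= i < size L) ipc (nth dgk L i).2 * z i = 1 &
      x = \sum_(0 <= i < size L) z i *: (nth dgk L i).1]].

Lemma sum_delta (V : nmodType) N i (F : nat -> V) : (i < N)%N ->
  \sum_(0 <= j < N) (if j == i then F j else 0) = F i.
Proof.
elim: N => // N IH; rewrite ltnS leq_eqVlt => /orP[/eqP ->|iN].
  rewrite big_nat_recr //= eqxx big1_seq ?add0r // => j /andP[_].
  by rewrite mem_index_iota => /andP[_] /ltn_eqF ->.
by rewrite big_nat_recr //= IH // (gtn_eqF iN) addr0.
Qed.

Lemma sum_cat (V : nmodType) L1 L2 (F : nat -> gk -> V) :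
  \sum_(0 <= i < size (L1 ++ L2)) F i (nth dgk (L1 ++ L2) i) =
  \sum_(0 <= i < size L1) F i (nth dgk L1 i) +
  \sum_(0 <= i < size L2) F (size L1 + i)%N (nth dgk L2 i).
Proof.
rewrite size_cat (@big_cat_nat _ _ _ (size L1) 0 (size L1 + size L2)) ?leq_addr //=.
congr (_ + _).
  by apply: eq_big_nat => i /andP[_ lt]; rewrite nth_cat lt.
rewrite -{1}(add0n (size L1)) big_addn addKn; apply: eq_big_nat => i _.
by rewrite nth_cat ltnNge leq_addl /= addnK addnC.
Qed.

Lemma sum_map (V : nmodType) (s : seq vec) k (F : nat -> gk -> V) :
  \sum_(0 <= i < size [seq (g, k) | g <- s]) F i (nth dgk [seq (g, k) | g <- s] i) =
  \sum_(i < size s) F i (s`_i, k).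
Proof.
rewrite size_map big_mkord; apply: eq_bigr => i _.
by rewrite (nth_map 0) //.
Qed.

Definition tolist (G : gensys R n) : seq gk :=
  [seq (g, GRay) | g <- grays G] ++ ([seq (g, GPoint) | g <- gpoints G] ++
  [seq (g, GClosure) | g <- gcpoints G]).

Lemma sum_tolist (V : nmodType) G (F : nat -> gk -> V) :
  \sum_(0 <= i < size (tolist G)) F i (nth dgk (tolist G) i) =
  \sum_(i < size (grays G)) F i ((grays G)`_i, GRay) +
  \sum_(i < size (gpoints G)) F (size (grays G) + i)%N ((gpoints G)`_i, GPoint) +
  \sum_(i < size (gcpoints G))
      F (size (grays G) + (size (gpoints G) + i))%N ((gcpoints G)`_i, GClosure).
Proof.
rewrite /tolist (@sum_cat V) (@sum_map V (grays G) GRay F) (@sum_cat V _ _ (fun i => F (size [seq (g, GRay) | g <- grays G] + i)%N)).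
rewrite (@sum_map V (gpoints G) GPoint (fun i => F (size [seq (g, GRay) | g <- grays G] + i)%N)).
rewrite (@sum_map V (gcpoints G) GClosure (fun i => F (size [seq (g, GRay) | g <- grays G] + (size [seq (g, GPoint) | g <- gpoints G] + i))%N)).
by rewrite !size_map addrA.
Qed.

Lemma size_tolist G : size (tolist G) =
  (size (grays G) + (size (gpoints G) + size (gcpoints G)))%N.
Proof. by rewrite /tolist !size_cat !size_map. Qed.

Definition ext m (f : 'I_m -> R) : nat -> R :=
  fun i => if insub i is Some j then f j else 0.
Arguments ext {m}.
Lemma extE m (f : 'I_m -> R) (k : 'I_m) : ext f k = f k.
Proof. by rewrite /ext valK. Qed.

Lemma sum0mul m (F : 'I_m -> R) : \sum_(i < m) 0 * F i = 0.
Proof. by rewrite big1 // => i _; rewrite mul0r. Qed.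
Lemma sum1mul m (F : 'I_m -> R) : \sum_(i < m) 1 * F i = \sum_(i < m) F i.
Proof. by apply: eq_bigr => i _; rewrite mul1r. Qed.

Lemma gen_gen' G : gen G = gen' (tolist G).
Proof.
set a := size (grays G); set b := size (gpoints G); set c := size (gcpoints G).
apply/seteqP; split => x.
  move=> [rho [sigma [tau [H1 [H2 H3] [k Hk] H4 H5]]]].
  pose z i := if (i < a)%N then ext rho i else if (i < a + b)%N then ext sigma (i - a)
              else ext tau (i - (a + b)).
  have za (i : 'I_a) : z i = rho i by rewrite /z ltn_ord extE.
  have zb (i : 'I_b) : z (a + i)%N = sigma i.
    by rewrite /z ltnNge leq_addr /= ltn_add2l ltn_ord addKn extE.
  have zc (i : 'I_c) : z (a + (b + i))%N = tau i.
    by rewrite /z ltnNge leq_addr /= addnA ltnNge leq_addr /= addKn extE.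
  exists z; split.
  - move=> i; rewrite size_tolist => lt; rewrite /z.
    case: ifP => [ia|]; first by rewrite -[i]/(nat_of_ord (Ordinal ia)) extE.
    move/negbT; rewrite -leqNgt => ai; case: ifP => [iab|/negbT].
      have lt' : (i - a < b)%N by lia.
      by rewrite -[(i - a)%N]/(nat_of_ord (Ordinal lt')) extE.
    rewrite -leqNgt => abi.
    have lt' : (i - (a + b) < c)%N by lia.
    by rewrite -[(i - (a + b))%N]/(nat_of_ord (Ordinal lt')) extE.
  - rewrite (@sum_tolist _ _ (fun i g => ipt g.2 * z i)) /= !sum0mul sum1mul add0r addr0.
    rewrite (eq_bigr (fun i => sigma i)); last by move=> i _; rewrite zb.
    rewrite lt0r psumr_eq0 ?negb_forall; last by move=> i _; apply: H2.
    rewrite sumr_ge0 ?andbT; last by move=> i _; apply: H2.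
    by apply/allPn; exists k; rewrite ?mem_index_enum //=.
  - rewrite (@sum_tolist _ _ (fun i g => ipc g.2 * z i)) /= !sum0mul !sum1mul add0r.
    rewrite (eq_bigr (fun i => sigma i)); last by move=> i _; rewrite zb.
    by rewrite (eq_bigr (fun i => tau i)) //; move=> i _; rewrite zc.
  - rewrite H5 (@sum_tolist _ _ (fun i g => z i *: g.1)) /=.
    congr (_ + _ + _); apply: eq_bigr => i _; by rewrite ?za ?zb ?zc.
move=> [z [H1 H2 H3 H4]].
have Ha (i : 'I_a) : (i < size (tolist G))%N.
  by rewrite size_tolist (leq_trans (ltn_ord i)) ?leq_addr.
have Hb (i : 'I_b) : (a + i < size (tolist G))%N.
  by rewrite size_tolist ltn_add2l (leq_trans (ltn_ord i)) ?leq_addr.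
have Hc (i : 'I_c) : (a + (b + i) < size (tolist G))%N.
  by rewrite size_tolist !ltn_add2l ltn_ord.
exists (fun i => z i), (fun i => z (a + i)%N), (fun i => z (a + (b + i))%N).
split.
- by move=> i; apply: H1.
- by split=> i; apply: H1.
- move: H2; rewrite (@sum_tolist _ _ (fun i g => ipt g.2 * z i)) /= !sum0mul sum1mul add0r addr0.
  move=> H; apply: contrapT => H'.
  move: H; rewrite big1 ?ltxx // => i _.
  by apply: contrapT => H''; apply: H'; exists i; apply/eqP.
- by move: H3; rewrite (@sum_tolist _ _ (fun i g => ipc g.2 * z i)) /= !sum0mul !sum1mul add0r.
- by rewrite H4 (@sum_tolist _ _ (fun i g => z i *: g.1)).
Qed.
End G.
Section E.
Variables (R : realType) (n : nat).
Notation vec := 'rV[R]_n.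
Implicit Types (L : seq (vec * gkind)).

Lemma dotpNl (a x : vec) : dotp (- a) x = - dotp a x.
Proof. by rewrite -scaleN1r dotpZl mulN1r. Qed.

Definition delta (k : 'I_n) : vec := \row_j (j == k)%:R.
Lemma dotp_delta k x : dotp (delta k) x = x 0 k.
Proof.
rewrite /dotp (bigD1 k) //= big1 ?addr0; first by rewrite mxE eqxx mul1r.
by move=> j /negbTE jk; rewrite mxE jk mul0r.
Qed.

Definition nnc (i : nat) : lc R n := (0, fun j => if j == i then -1 else 0, 0, false).
Definition cpt L : lc R n := (0, fun j => - ipt R (nth (dgk R n) L j).2, 0, true).
Definition c1a L : lc R n := (0, fun j => ipc R (nth (dgk R n) L j).2, 1, false).
Definition c1b L : lc R n := (0, fun j => - ipc R (nth (dgk R n) L j).2, -1, false).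
Definition crd L k : lc R n := (delta k, fun j => - (nth (dgk R n) L j).1 0 k, 0, false).
Definition crd' L k : lc R n := (- delta k, fun j => (nth (dgk R n) L j).1 0 k, 0, false).
Definition encL L : seq (lc R n) :=
  [seq nnc i | i <- iota 0 (size L)] ++ [:: cpt L; c1a L; c1b L] ++
  [seq crd L k | k <- enum 'I_n] ++ [seq crd' L k | k <- enum 'I_n].

Lemma enc_correct L x : gen' L x <->
  exists z, forall c, c \in encL L -> satL (size L) x z c.
Proof.
set N := size L.
have Hnn : forall z i, (i < N)%N -> lval N x z (nnc i) = - z i.
  move=> z i iN; rewrite /lval /lA /lE /= dotp0l add0r.
  rewrite (eq_bigr (fun j => if j == i then - z j else 0)) ?sum_delta //.
  by move=> j _; case: eqP => _; rewrite ?mulN1r ?mul0r.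
have Hpt : forall z, lval N x z (cpt L) = - \sum_(0 <= i < N) ipt R (nth (dgk R n) L i).2 * z i.
  move=> z; rewrite /lval /lA /lE /= dotp0l add0r -sumrN.
  by apply: eq_bigr => i _; rewrite mulNr.
have Ha : forall z, lval N x z (c1a L) = \sum_(0 <= i < N) ipc R (nth (dgk R n) L i).2 * z i.
  by move=> z; rewrite /lval /lA /lE /= dotp0l add0r.
have Hb : forall z, lval N x z (c1b L) = - \sum_(0 <= i < N) ipc R (nth (dgk R n) L i).2 * z i.
  move=> z; rewrite /lval /lA /lE /= dotp0l add0r -sumrN.
  by apply: eq_bigr => i _; rewrite mulNr.
have Hsum : forall z k, (\sum_(0 <= i < N) z i *: (nth (dgk R n) L i).1) 0 k =
                        \sum_(0 <= i < N) z i * (nth (dgk R n) L i).1 0 k.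
  by move=> z k; rewrite summxE; apply: eq_bigr => i _; rewrite mxE.
have Hc : forall z k, lval N x z (crd L k) = x 0 k - \sum_(0 <= i < N) z i * (nth (dgk R n) L i).1 0 k.
  move=> z k; rewrite /lval /lA /lE /= dotp_delta -sumrN; congr (_ + _).
  by apply: eq_bigr => i _; rewrite mulNr mulrC.
have Hc' : forall z k, lval N x z (crd' L k) = - x 0 k + \sum_(0 <= i < N) z i * (nth (dgk R n) L i).1 0 k.
  move=> z k; rewrite /lval /lA /lE /= dotpNl dotp_delta; congr (_ + _).
  by apply: eq_bigr => i _; rewrite mulrC.
split.
  move=> [z [H1 H2 H3 H4]]; exists z => c; rewrite /encL !mem_cat.
  move=> /orP[/mapP [i] |/orP[|/orP[/mapP [k] _ ->|/mapP [k] _ ->]]].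
  - rewrite mem_iota add0n => /andP[_ iN] ->.
    by rewrite /satL /satv Hnn //= oppr_le0; apply: H1.
  - rewrite !inE => /orP[/eqP->|/orP[/eqP->|/eqP->]]; rewrite /satL /satv /=.
    + by rewrite Hpt /lB /= oppr_lt0.
    + by rewrite Ha H3 /lB /=.
    + by rewrite Hb H3 /lB /=.
  - by rewrite /satL /satv Hc /lB /= H4 Hsum subrr.
  - by rewrite /satL /satv Hc' /lB /= H4 Hsum addNr.
move=> [z Hz]; exists z; split.
- move=> i iN; have := Hz (nnc i).
  rewrite /satL /satv Hnn //= oppr_le0; apply.
  by rewrite /encL mem_cat map_f // mem_iota add0n.
- have := Hz (cpt L); rewrite /satL /satv Hpt /= /lB /= oppr_lt0; apply.
  by rewrite /encL !mem_cat !inE eqxx /= orbT.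
- have := Hz (c1a L); rewrite /satL /satv Ha /= /lB /=.
  have := Hz (c1b L); rewrite /satL /satv Hb /= /lB /= lerN2.
  move=> h1 h2; apply/eqP; rewrite eq_le h2 ?h1 //.
  + by rewrite /encL !mem_cat !inE eqxx /= !orbT.
  + by rewrite /encL !mem_cat !inE eqxx /= !orbT.
- apply/matrixP => i k; rewrite (ord1 i) Hsum.
  have := Hz (crd L k); rewrite /satL /satv Hc /= /lB /= subr_le0.
  have := Hz (crd' L k); rewrite /satL /satv Hc' /= /lB /= addrC subr_le0.
  move=> h1 h2; apply/eqP; rewrite eq_le h2 ?h1 //.
  + by rewrite /encL !mem_cat map_f ?mem_enum ?orbT.
  + by rewrite /encL !mem_cat map_f ?mem_enum ?orbT.
Qed.

Definition toC (c : lc R n) : constraint R n := (lA c, lB c, lS c).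

Lemma gen'_NNC L : gen' L !=set0 -> is_NNC (gen' L).
Proof.
move=> [x0 Hx0].
set S := elimAll (size L) (encL L).
set C := [seq toC c | c <- S].
have E : gen' L = con C.
  apply/seteqP; split => x.
    move/enc_correct/elimAll_correct => H c /mapP [c' c'S ->].
    by have := H c' c'S; rewrite /satL /satv /lval big_geq ?addr0.
  move=> H; apply/enc_correct/elimAll_correct => c cS.
  by have := H (toC c) (map_f _ cS); rewrite /satL /satv /lval big_geq ?addr0.
exists [seq c <- C | ca c != 0]; split.
  by move=> c; rewrite mem_filter => /andP[].
rewrite E; apply/seteqP; split => x Hx c.
  by rewrite mem_filter => /andP[_]; apply: Hx.
move=> cC; case: (eqVneq (ca c) 0) => c0; last by apply: Hx; rewrite mem_filter c0.
rewrite E in Hx0; have := Hx0 c cC.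
by rewrite /sat_constraint c0 !dotp0l.
Qed.
End E.
Section RL.
Variable R : realType.
Implicit Types (A B C b s t : R).

Definition rel (st : bool) (x y : R) : Prop := if st then x < y else x <= y.

Lemma relW st x y : rel st x y -> x <= y.
Proof. by rewrite /rel; case: st => // /ltW. Qed.

Lemma comb_sat st A B b t : 0 <= t <= 1 -> rel st A b -> rel st B b ->
  rel st ((1 - t) * A + t * B) b.
Proof.
move=> /andP[t0 t1]; rewrite /rel; case: st => hA hB.
- have -> : b = (1 - t) * b + t * b by ring.
  case: (eqVneq t 0) => [->|tn0]; first by rewrite subr0 !mul1r !mul0r !addr0.
  apply: ler_ltD; first by apply: ler_wpM2l; rewrite ?subr_ge0 // ltW.
  by rewrite ltr_pM2l // lt0r tn0.
- nra.
Qed.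

Lemma comb_clo st A B b t : A <= b -> rel st B b -> 0 < t <= 1 ->
  rel st ((1 - t) * A + t * B) b.
Proof.
move=> hA; rewrite /rel; case: st => hB /andP[t0 t1].
- have -> : b = (1 - t) * b + t * b by ring.
  by apply: ler_ltD; [apply: ler_wpM2l; rewrite ?subr_ge0 | rewrite ltr_pM2l].
- nra.
Qed.

Lemma aff_interp st A B b s t : 0 <= s -> s < t -> t <= 1 ->
  (1 - s) * A + s * B <= b -> rel st B b -> rel st ((1 - t) * A + t * B) b.
Proof.
move=> s0 st' t1 hS hB.
have s1 : 1 - s > 0 by rewrite subr_gt0; apply: lt_le_trans t1.
have E : (1 - t) * A + t * B = (1 - (t - s) / (1 - s)) * ((1 - s) * A + s * B) + (t - s) / (1 - s) * B.
  by field; rewrite lt0r_neq0.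
rewrite E; apply: comb_clo => //; apply/andP; split.
  by rewrite divr_gt0 // subr_gt0.
by rewrite ler_pdivrMr // mul1r lerD2r.
Qed.

Lemma ray_le0 st A B b : (forall r, 0 <= r -> rel st (A + r * B) b) -> B <= 0.
Proof.
move=> H; rewrite leNgt; apply/negP => B0.
have r0 : 0 <= (`|b - A| + 1) / B by rewrite divr_ge0 // ?ltW // addr_ge0.
have := relW (H _ r0); rewrite divfK ?lt0r_neq0 //.
have := ler_norm (b - A); move=> h1 h2; lra.
Qed.

Lemma clo_le st A C b : (forall t, 0 <= t < 1 -> rel st ((1 - t) * A + t * C) b) -> C <= b.
Proof.
move=> H; rewrite leNgt; apply/negP => Cb.
set d := `|A - C| + (C - b).
have d0 : 0 < d by rewrite /d ltr_wpDl // subr_gt0.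
set t := 1 - (C - b) / d.
have t0 : 0 <= t.
  by rewrite /t subr_ge0 ler_pdivrMr // mul1r /d lerDr.
have t1 : t < 1 by rewrite /t ltrBlDr ltrDl divr_gt0 // subr_gt0.
have := relW (H t _); rewrite t0 t1 => /(_ isT).
set dl := (C - b) / d.
have dl0 : 0 < dl by rewrite divr_gt0 // subr_gt0.
have dld : dl * d = C - b by rewrite divfK // lt0r_neq0.
have e0 : (1 - t) * A + t * C = C + dl * (A - C) by rewrite /t /dl; ring.
have e1 : - (dl * `|A - C|) <= dl * (A - C).
  by rewrite -mulrN; apply: ler_wpM2l; [exact: ltW | rewrite lerNl -normrN ler_norm].
have e2 : dl * `|A - C| < C - b.
  by rewrite -dld ltr_pM2l // /d ltrDl subr_gt0.
rewrite e0; lra.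
Qed.

Lemma cross A B b t : A < B ->
  [/\ (1 - t) * A + t * B <= b <-> t <= (A - b) / (A - B),
      (1 - t) * A + t * B < b <-> t < (A - b) / (A - B) &
      (1 - (A - b) / (A - B)) * A + (A - b) / (A - B) * B = b].
Proof.
move=> AB; have d0 : 0 < B - A by rewrite subr_gt0.
have E : (A - b) / (A - B) = (b - A) / (B - A).
  by rewrite -mulrNN opprB -invrN opprB.
have E2 : (1 - t) * A + t * B = A + t * (B - A) by ring.
rewrite E E2; split.
- by rewrite ler_pdivlMr // -lerBrDl mulrC.
- by rewrite ltr_pdivlMr // -ltrBrDl mulrC.
- by field; rewrite lt0r_neq0.
Qed.

Lemma ray_far A B b : B < 0 -> exists r0, forall r, r0 <= r -> A + r * B < b.
Proof.
move=> B0; exists ((`|A - b| + 1) / - B) => r hr.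
have nB : 0 < - B by rewrite oppr_gt0.
have : (`|A - b| + 1) <= r * - B by rewrite -ler_pdivrMr.
have := ler_norm (A - b); lra.
Qed.

Lemma ray_far_up A B b : 0 < B -> exists2 r, 0 <= r & b < A + r * B.
Proof.
move=> B0; exists ((`|b - A| + 1) / B); first by rewrite divr_ge0 // ?ltW // addr_ge0.
rewrite divfK ?lt0r_neq0 //; have := ler_norm (b - A); lra.
Qed.

Lemma clo_near A C b : C < b ->
  exists2 t0, t0 < 1 & forall t, t0 <= t -> t < 1 -> (1 - t) * A + t * C < b.
Proof.
move=> Cb; set d := `|A - C| + (b - C).
have d0 : 0 < d by rewrite /d ltr_wpDl // subr_gt0.
set dl := (b - C) / d.
have dl0 : 0 < dl by rewrite divr_gt0 // subr_gt0.
have dld : dl * d = b - C by rewrite divfK // lt0r_neq0.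
exists (1 - dl); first by rewrite ltrBlDr ltrDl.
move=> t ht t1.
have e0 : (1 - t) * A + t * C = C + (1 - t) * (A - C) by ring.
have u0 : 0 < 1 - t by rewrite subr_gt0.
have e1 : (1 - t) * (A - C) <= (1 - t) * `|A - C| by apply: ler_wpM2l; [exact: ltW | exact: ler_norm].
have e2 : (1 - t) * `|A - C| <= dl * `|A - C| by apply: ler_wpM2r => //; lra.
have e3 : dl * `|A - C| < b - C by rewrite -dld ltr_pM2l // /d ltrDl subr_gt0.
rewrite e0; lra.
Qed.

Lemma ev_all (T : eqType) (s : seq T) (Q : T -> R -> Prop) :
  (forall c, c \in s -> exists t0, forall t, t0 <= t -> Q c t) ->
  exists t0, forall t, t0 <= t -> forall c, c \in s -> Q c t.
Proof.
elim: s => [|a s IH] H; first by exists 0.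
have [t1 H1] := H a (mem_head _ _).
have [t2 H2] : exists t0, forall t, t0 <= t -> forall c, c \in s -> Q c t.
  by apply: IH => c cs; apply: H; rewrite inE cs orbT.
exists (Num.max t1 t2) => t; rewrite ge_max => /andP[h1 h2] c; rewrite inE.
by case/orP => [/eqP->|cs]; [apply: H1 | apply: H2].
Qed.

Lemma ev_all_lt (T : eqType) (s : seq T) (Q : T -> R -> Prop) :
  (forall c, c \in s -> exists2 t0, t0 < 1 & forall t, t0 <= t -> t < 1 -> Q c t) ->
  exists2 t0, t0 < 1 & forall t, t0 <= t -> t < 1 -> forall c, c \in s -> Q c t.
Proof.
elim: s => [|a s IH] H; first by exists 0.
have [t1 t11 H1] := H a (mem_head _ _).
have [t2 t21 H2] : exists2 t0, t0 < 1 & forall t, t0 <= t -> t < 1 -> forall c, c \in s -> Q c t.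
  by apply: IH => c cs; apply: H; rewrite inE cs orbT.
exists (Num.max t1 t2); first by rewrite gt_max t11 t21.
move=> t; rewrite ge_max => /andP[h1 h2] t1' c; rewrite inE.
by case/orP => [/eqP->|cs]; [apply: H1 | apply: H2].
Qed.
End RL.
Section GL.
Variables (R : realType) (n : nat).
Notation vec := 'rV[R]_n.
Implicit Types (L : seq (vec * gkind)).
Notation gg L j := (nth (dgk R n) L j).1.
Notation kd L j := (nth (dgk R n) L j).2.

Lemma sum_upd N i (F z : nat -> R) a b : (i < N)%N ->
  \sum_(0 <= j < N) F j * (a * z j + (if j == i then b else 0)) =
  a * \sum_(0 <= j < N) F j * z j + F i * b.
Proof.
move=> iN; rewrite mulr_sumr -(sum_delta (fun j => F j * b) iN) -big_split /=.
by apply: eq_bigr => j _; rewrite mulrDr mulrCA; case: eqP; rewrite ?mulr0.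
Qed.

Lemma sumv_upd N i (g : nat -> vec) (z : nat -> R) a b : (i < N)%N ->
  \sum_(0 <= j < N) (a * z j + (if j == i then b else 0)) *: g j =
  a *: \sum_(0 <= j < N) z j *: g j + b *: g i.
Proof.
move=> iN; rewrite scaler_sumr -(sum_delta (fun j => b *: g j) iN) -big_split /=.
by apply: eq_bigr => j _; rewrite scalerDl scalerA; case: eqP; rewrite ?scale0r.
Qed.

Lemma gen'_upd L x i a b : (i < size L)%N -> gen' L x -> 0 <= a -> 0 <= b ->
  (forall s, 0 < s -> 0 < a * s + ipt R (kd L i) * b) -> a + ipc R (kd L i) * b = 1 ->
  gen' L (a *: x + b *: gg L i).
Proof.
move=> iN [z [H1 H2 H3 ->]] a0 b0 Hp Hc.
exists (fun j => a * z j + (if j == i then b else 0)); split.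
- move=> j jN; apply: addr_ge0; first by rewrite mulr_ge0 // H1.
  by case: eqP.
- by rewrite sum_upd //; apply: Hp.
- by rewrite sum_upd // H3 mulr1.
- by rewrite sumv_upd.
Qed.

Lemma gen'_ray L x i r : (i < size L)%N -> kd L i = GRay -> gen' L x -> 0 <= r ->
  gen' L (x + r *: gg L i).
Proof.
move=> iN ki gx r0; rewrite -[x]scale1r; apply: gen'_upd => //.
- by move=> s s0; rewrite ki /ipt mul1r mul0r addr0.
- by rewrite ki /ipc mul0r addr0.
Qed.

Lemma gen'_clo L x i t : (i < size L)%N -> kd L i = GClosure -> gen' L x ->
  0 <= t -> t < 1 -> gen' L ((1 - t) *: x + t *: gg L i).
Proof.
move=> iN ki gx t0 t1; apply: gen'_upd => //.
- by rewrite subr_ge0 ltW.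
- by move=> s s0; rewrite ki /ipt mul0r addr0 mulr_gt0 // subr_gt0.
- by rewrite ki /ipc mul1r subrK.
Qed.

Lemma gen'_pt L i : (i < size L)%N -> kd L i = GPoint -> gen' L (gg L i).
Proof.
move=> iN ki.
exists (fun j => 0 * 0 + (if j == i then 1 else 0)); split.
- by move=> j _; rewrite mul0r add0r; case: eqP.
- by rewrite (@sum_upd _ _ _ (fun=> 0)) // ki /ipt mul0r add0r mul1r.
- by rewrite (@sum_upd _ _ _ (fun=> 0)) // ki /ipc mul0r add0r mul1r.
- by rewrite (@sumv_upd _ _ _ (fun=> 0)) // scale0r add0r scale1r.
Qed.

Lemma gen'_cat_l L1 L2 x : gen' L1 x -> gen' (L1 ++ L2) x.
Proof.
move=> [z [H1 H2 H3 ->]].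
exists (fun i => if (i < size L1)%N then z i else 0); split.
- move=> i _; case: ifP => // lt; exact: H1.
- rewrite (@sum_cat _ _ _ _ _ (fun i g => ipt R g.2 * (if (i < size L1)%N then z i else 0))) /=.
  rewrite [X in _ + X]big1 ?addr0; last by move=> i _; rewrite ltnNge leq_addr /= mulr0.
  by rewrite (eq_big_nat _ _ (F2 := fun i => ipt R (kd L1 i) * z i)) // => i /andP[_ ->].
- rewrite (@sum_cat _ _ _ _ _ (fun i g => ipc R g.2 * (if (i < size L1)%N then z i else 0))) /=.
  rewrite [X in _ + X]big1 ?addr0; last by move=> i _; rewrite ltnNge leq_addr /= mulr0.
  by rewrite (eq_big_nat _ _ (F2 := fun i => ipc R (kd L1 i) * z i)) // => i /andP[_ ->].
- rewrite (@sum_cat _ _ _ _ _ (fun i g => (if (i < size L1)%N then z i else 0) *: g.1)) /=.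
  rewrite [X in _ = _ + X]big1 ?addr0; last by move=> i _; rewrite ltnNge leq_addr /= scale0r.
  by apply: eq_big_nat => i /andP[_ ->].
Qed.

Lemma gen'_cat_r L1 L2 x : gen' L2 x -> gen' (L1 ++ L2) x.
Proof.
move=> [z [H1 H2 H3 ->]].
exists (fun i => if (i < size L1)%N then 0 else z (i - size L1)%N); split.
- move=> i; rewrite size_cat; case: ifP => // /negbT; rewrite -leqNgt => lt iN.
  by apply: H1; rewrite ltn_subLR.
- rewrite (@sum_cat _ _ _ _ _ (fun i g => ipt R g.2 * (if (i < size L1)%N then 0 else z (i - size L1)%N))) /=.
  rewrite big1_seq ?add0r; last by move=> i /andP[_]; rewrite mem_index_iota => /andP[_ ->]; rewrite mulr0.
  by under eq_bigr => i _ do rewrite ltnNge leq_addr /= addKn.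
- rewrite (@sum_cat _ _ _ _ _ (fun i g => ipc R g.2 * (if (i < size L1)%N then 0 else z (i - size L1)%N))) /=.
  rewrite big1_seq ?add0r; last by move=> i /andP[_]; rewrite mem_index_iota => /andP[_ ->]; rewrite mulr0.
  by under eq_bigr => i _ do rewrite ltnNge leq_addr /= addKn.
- rewrite (@sum_cat _ _ _ _ _ (fun i g => (if (i < size L1)%N then 0 else z (i - size L1)%N) *: g.1)) /=.
  rewrite [X in _ = X + _]big1_seq ?add0r; last by move=> i /andP[_]; rewrite mem_index_iota => /andP[_ ->]; rewrite scale0r.
  by apply: eq_bigr => i _; rewrite ltnNge leq_addr /= addKn.
Qed.

Lemma exists_pos N (F : nat -> R) : 0 < \sum_(0 <= j < N) F j -> exists2 j, (j < N)%N & 0 < F j.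
Proof.
move=> H; apply: contrapT => H'; move: H; apply/negP; rewrite -leNgt.
rewrite big_seq; apply: sumr_le0 => j; rewrite mem_index_iota => /andP[_ jN].
by rewrite leNgt; apply/negP => Fj; apply: H'; exists j.
Qed.

Lemma gen'_bound L (z : nat -> R) (a : vec) b :
  (forall j, (j < size L)%N -> 0 <= z j) ->
  \sum_(0 <= j < size L) ipc R (kd L j) * z j = 1 ->
  (forall j, (j < size L)%N -> 0 < z j -> dotp a (gg L j) <= ipc R (kd L j) * b) ->
  dotp a (\sum_(0 <= j < size L) z j *: gg L j) <= b.
Proof.
move=> H1 H3 Hb; rewrite dotp_sum.
have -> : b = \sum_(0 <= j < size L) z j * (ipc R (kd L j) * b).
  by rewrite -[LHS]mul1r -H3 mulr_suml; apply: eq_bigr => j _; rewrite mulrA [z j * _]mulrC.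
rewrite big_seq [X in _ <= X]big_seq; apply: ler_sum => j; rewrite mem_index_iota => /andP[_ jN].
rewrite dotpZ; have := H1 j jN; rewrite le0r => /orP[/eqP->|zj]; first by rewrite !mul0r.
by rewrite ler_pM2l // Hb.
Qed.

Lemma gen'_satgen L (z : nat -> R) (a : vec) b :
  (forall j, (j < size L)%N -> 0 <= z j) ->
  \sum_(0 <= j < size L) ipc R (kd L j) * z j = 1 ->
  (forall j, (j < size L)%N -> dotp a (gg L j) <= ipc R (kd L j) * b) ->
  dotp a (\sum_(0 <= j < size L) z j *: gg L j) = b ->
  forall j, (j < size L)%N -> 0 < z j -> dotp a (gg L j) = ipc R (kd L j) * b.
Proof.
move=> H1 H3 Hb E.
have E2 : \sum_(0 <= j < size L) z j * (ipc R (kd L j) * b - dotp a (gg L j)) = 0.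
  rewrite (eq_bigr (fun j => (ipc R (kd L j) * z j) * b - z j * dotp a (gg L j))); last first.
    by move=> j _; rewrite mulrBr mulrCA mulrA.
  rewrite sumrB -mulr_suml H3 mul1r -{1}E dotp_sum.
  by rewrite (eq_bigr (fun j => z j * dotp a (gg L j))) ?subrr // => j _; rewrite dotpZ.
move=> j jN zj; apply/eqP; rewrite eq_sym -subr_eq0.
have : z j * (ipc R (kd L j) * b - dotp a (gg L j)) == 0.
  move: E2 => /eqP; rewrite big_seq psumr_eq0.
    by move/allP => /(_ j); rewrite mem_index_iota jN /= => /(_ isT).
  move=> i; rewrite mem_index_iota => /andP[_ iN].
  by rewrite mulr_ge0 ?H1 // subr_ge0 Hb.
by rewrite mulf_eq0 (negbTE (lt0r_neq0 zj)).
Qed.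

Lemma gen'_ind L (U : set vec) :
  (forall u v t, U u -> U v -> 0 <= t -> t <= 1 -> U ((1 - t) *: u + t *: v)) ->
  (forall i u r, (i < size L)%N -> kd L i = GRay -> U u -> 0 <= r -> U (u + r *: gg L i)) ->
  (forall i u t, (i < size L)%N -> kd L i = GClosure -> U u -> 0 <= t -> t < 1 ->
     U ((1 - t) *: u + t *: gg L i)) ->
  (forall i, (i < size L)%N -> kd L i = GPoint -> U (gg L i)) ->
  gen' L `<=` U.
Proof.
move=> S1 S2 S3 S4 x [z [H1 H2 H3 ->]].
set N := size L.
have [i0 i0N hpos] := exists_pos H2.
have [ki0 zi0] : kd L i0 = GPoint /\ 0 < z i0.
  by move: hpos; case: (kd L i0) => /=; rewrite /ipt ?mul0r ?ltxx // mul1r.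
set w := fun j => if j == i0 then 0 else z j.
have zw : forall j, z j = 1 * w j + (if j == i0 then z i0 else 0).
  by move=> j; rewrite mul1r /w; case: eqP => [->|]; rewrite ?add0r ?addr0.
set s := fun k => \sum_(0 <= j < k) ipc R (kd L j) * w j.
set V := fun k => \sum_(0 <= j < k) (ipc R (kd L j) * w j) *: gg L j.
set W := fun k => \sum_(0 <= j < k) ((1 - ipc R (kd L j)) * w j) *: gg L j.
have w0 : forall j, (j < N)%N -> 0 <= w j by move=> j jN; rewrite /w; case: eqP => // _; apply: H1.
have P : forall k, (k <= N)%N -> forall u l, U u -> 0 < l ->
    U ((l + s k)^-1 *: (l *: u + V k) + W k).
  elim=> [_|k IH kN] u l Uu l0.
    by rewrite /s /V /W !big_geq // !addr0 scalerA mulVf ?lt0r_neq0 // scale1r.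
  have kN' : (k < N)%N by [].
  have IH' := IH (ltnW kN).
  rewrite /s /V /W !big_nat_recr //= -/(s k) -/(V k) -/(W k).
  case E: (kd L k) => /=.
  - rewrite /ipc mul0r addr0 scale0r addr0 subr0 mul1r addrA.
    by apply: S2 => //; [apply: IH' | apply: w0].
  - rewrite /ipc !subrr !mul0r !scale0r !addr0 !mul1r.
    set l' := l + w k.
    have l'0 : 0 < l' by rewrite /l' ltr_wpDr // w0.
    have -> : l + (s k + w k) = l' + s k by rewrite /l'; ring.
    have -> : l *: u + (V k + w k *: gg L k) = l' *: (l'^-1 *: (l *: u + w k *: gg L k)) + V k.
      by rewrite scalerA mulfV ?lt0r_neq0 // scale1r [RHS]addrAC -addrA.
    apply: IH' => //.
    have -> : l'^-1 *: (l *: u + w k *: gg L k) = (1 - w k / l') *: u + (w k / l') *: gg L k.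
      rewrite scalerDr !scalerA; congr (_ *: _ + _ *: _); last by rewrite mulrC.
      by rewrite /l'; field; rewrite -/l' lt0r_neq0.
    apply: S1 => //; first exact: S4.
      by rewrite divr_ge0 ?w0 // ltW.
    by rewrite ler_pdivrMr // mul1r /l' lerDr ltW.
  - rewrite /ipc !subrr !mul0r !scale0r !addr0 !mul1r.
    set l' := l + w k.
    have l'0 : 0 < l' by rewrite /l' ltr_wpDr // w0.
    have -> : l + (s k + w k) = l' + s k by rewrite /l'; ring.
    have -> : l *: u + (V k + w k *: gg L k) = l' *: (l'^-1 *: (l *: u + w k *: gg L k)) + V k.
      by rewrite scalerA mulfV ?lt0r_neq0 // scale1r [RHS]addrAC -addrA.
    apply: IH' => //.
    have -> : l'^-1 *: (l *: u + w k *: gg L k) = (1 - w k / l') *: u + (w k / l') *: gg L k.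
      rewrite scalerDr !scalerA; congr (_ *: _ + _ *: _); last by rewrite mulrC.
      by rewrite /l'; field; rewrite -/l' lt0r_neq0.
    apply: S3 => //; first by rewrite divr_ge0 ?w0 // ltW.
    by rewrite ltr_pdivrMr // mul1r /l' ltrDr.
have := P N (leqnn N) (gg L i0) (z i0) (S4 _ i0N ki0) zi0.
congr U.
have Hs : z i0 + s N = 1.
  rewrite -H3 (eq_bigr (fun j => ipc R (kd L j) * (1 * w j + (if j == i0 then z i0 else 0)))); last first.
    by move=> j _; rewrite -zw.
  by rewrite sum_upd // mul1r ki0 /ipc mul1r addrC.
rewrite Hs invr1 scale1r.
rewrite (eq_bigr (fun j => (1 * w j + (if j == i0 then z i0 else 0)) *: gg L j)); last first.
  by move=> j _; rewrite -zw.
rewrite sumv_upd // scale1r -addrA [LHS]addrC; congr (_ + _).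
rewrite /V /W.
rewrite -big_split /=; apply: eq_bigr => j _.
by rewrite -scalerDl -mulrDl addrC subrK mul1r.
Qed.
End GL.
Section TP.
Variables (R : realType) (n : nat).
Notation vec := 'rV[R]_n.

Lemma coord_le_norm (x : vec) k : `|x 0 k| <= `|x|.
Proof.
have := le_bigmax 0 (fun ij : 'I_1 * 'I_n => `|x ij.1 ij.2|) (0, k).
by rewrite -mx_normrE.
Qed.

Lemma closure_ballP (P : set vec) g :
  ~ closure P g -> exists2 e : R, 0 < e & forall x, `|g - x| < e -> ~ P x.
Proof.
move=> H.
have [B [nB PB]] : exists B, nbhs g B /\ forall x, P x -> ~ B x.
  apply: contrapT => H1; apply: H => B nB.
  apply: contrapT => H2; apply: H1; exists B; split=> // x Px Bx.
  by apply: H2; exists x.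
move/nbhs_ballP: nB => [e e0 sB].
exists e => // x gx Px; apply: (PB x Px); apply: sB.
by rewrite -ball_normE /=.
Qed.

Lemma closure_near (P : set vec) g e : closure P g -> 0 < e ->
  exists x, P x /\ `|g - x| < e.
Proof.
move=> H e0; have [x [Px Bx]] := H _ (nbhsx_ballx g e e0).
by exists x; split => //; move: Bx; rewrite -ball_normE.
Qed.

Lemma dotp_norm (a v : vec) : `|dotp a v| <= (\sum_k `|a 0 k|) * `|v|.
Proof.
rewrite /dotp mulr_suml; apply: le_trans (ler_norm_sum _ _ _) _.
apply: ler_sum => k _; rewrite normrM ler_wpM2l //; exact: coord_le_norm.
Qed.

Lemma closure_half (P : set vec) (a : vec) b g :
  (forall x, P x -> dotp a x <= b) -> closure P g -> dotp a g <= b.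
Proof.
move=> HP Hc; rewrite leNgt; apply/negP => gb.
set S := \sum_k `|a 0 k| + 1.
have S0 : 0 < S by rewrite /S ltr_wpDl ?sumr_ge0.
have e0 : 0 < (dotp a g - b) / S by rewrite divr_gt0 // subr_gt0.
have [x [Px gx]] := closure_near Hc e0.
have h1 := HP x Px.
have h2 : `|dotp a (g - x)| <= (\sum_k `|a 0 k|) * `|g - x| by apply: dotp_norm.
have h3 : (\sum_k `|a 0 k|) * `|g - x| <= S * `|g - x|.
  by rewrite ler_wpM2r // /S lerDl.
have h4 : S * `|g - x| < dotp a g - b by rewrite mulrC -ltr_pdivlMr.
have h5 := ler_norm (dotp a (g - x)).
rewrite dotpB in h2 h5; lra.
Qed.
End TP.

Section TL.
Variables (R : realType) (n : nat).
Notation vec := 'rV[R]_n.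
Notation gg L j := (nth (dgk R n) L j).1.
Notation kd L j := (nth (dgk R n) L j).2.

Lemma in_tolist (G : gensys R n) j : (j < size (tolist G))%N ->
  in_gensys G (kd (tolist G) j) (gg (tolist G) j).
Proof.
rewrite /tolist !size_cat !size_map nth_cat size_map.
case: ifP => [lt _|/negbT]; first by rewrite (nth_map 0) //= mem_nth.
rewrite -leqNgt => le lt; rewrite nth_cat size_map.
case: ifP => [lt2|/negbT]; first by rewrite (nth_map 0) //= mem_nth.
rewrite -leqNgt => le2.
have lt3 : (j - size (grays G) - size (gpoints G) < size (gcpoints G))%N by lia.
by rewrite (nth_map 0) //= mem_nth.
Qed.

Lemma tolist_in (G : gensys R n) k g : in_gensys G k g ->
  exists2 j, (j < size (tolist G))%N & nth (dgk R n) (tolist G) j = (g, k).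
Proof.
rewrite /tolist; case: k => /= H.
- exists (index g (grays G)); first by rewrite size_cat size_map (leq_trans _ (leq_addr _ _)) // index_mem.
  by rewrite nth_cat size_map index_mem H (nth_map 0) ?index_mem // nth_index.
- exists (size (grays G) + index g (gpoints G))%N.
    by rewrite !size_cat !size_map ltn_add2l (leq_trans _ (leq_addr _ _)) // index_mem.
  rewrite nth_cat size_map ltnNge leq_addr /= addKn nth_cat size_map index_mem H.
  by rewrite (nth_map 0) ?index_mem // nth_index.
- exists (size (grays G) + (size (gpoints G) + index g (gcpoints G)))%N.
    by rewrite !size_cat !size_map !ltn_add2l index_mem.
  rewrite nth_cat size_map ltnNge leq_addr /= addKn nth_cat size_map ltnNge leq_addr /= addKn.
  by rewrite (nth_map 0) ?index_mem // nth_index.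
Qed.
End TL.
Section Basic.
Variables (R : realType) (n : nat).
Notation vec := 'rV[R]_n.

Definition clcon (C : seq (constraint R n)) (x : vec) :=
  forall c, c \in C -> dotp (ca c) x <= cb c.

Definition satb (x : vec) (c : constraint R n) : bool :=
  if cstrict c then dotp (ca c) x < cb c else dotp (ca c) x <= cb c.

Lemma satbP (x : vec) (c : constraint R n) : sat_constraint x c <-> satb x c.
Proof. by rewrite /sat_constraint /satb; case: cstrict. Qed.

Lemma satE (x : vec) (c : constraint R n) : sat_constraint x c <-> rel (cstrict c) (dotp (ca c) x) (cb c).
Proof. by rewrite /sat_constraint /rel; case: cstrict. Qed.

Lemma satE2 k (g : vec) (c : constraint R n) :
  saturates k g c <-> dotp (ca c) g = ipc R k * cb c.
Proof. by case: k => /=; rewrite /ipc ?mul0r ?mul1r. Qed.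

Lemma dotp_comb (a u v : vec) t :
  dotp a ((1 - t) *: u + t *: v) = (1 - t) * dotp a u + t * dotp a v.
Proof. by rewrite dotpD !dotpZ. Qed.

Lemma con_conv C (u v : vec) t : con C u -> con C v -> 0 <= t -> t <= 1 ->
  con C ((1 - t) *: u + t *: v).
Proof.
move=> hu hv t0 t1 c cC; apply/satE; rewrite dotp_comb.
by apply: comb_sat; [rewrite t0 t1 | apply/satE/hu | apply/satE/hv].
Qed.

Lemma con_clo C (v y : vec) t : con C v -> clcon C y -> 0 <= t -> t < 1 ->
  con C ((1 - t) *: v + t *: y).
Proof.
move=> hv hy t0 t1 c cC; apply/satE; rewrite dotp_comb.
have -> : (1 - t) * dotp (ca c) v + t * dotp (ca c) y =
          (1 - (1 - t)) * dotp (ca c) y + (1 - t) * dotp (ca c) v by ring.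
apply: comb_clo; first exact: hy.
  exact/satE/hv.
by rewrite subr_gt0 t1 /= lerBlDr lerDl.
Qed.

Lemma inUl (A B : set vec) x : A x -> (A `|` B) x.
Proof. by move=> h; apply: subsetUl. Qed.
Lemma inUr (A B : set vec) x : B x -> (A `|` B) x.
Proof. by move=> h; apply: subsetUr. Qed.

Lemma vcomb (u v : vec) l m :
  (1 - l) *: u + l *: ((1 - m) *: u + m *: v) = (1 - l * m) *: u + (l * m) *: v.
Proof.
rewrite scalerDr !scalerA addrA -scalerDl; congr (_ *: _ + _); ring.
Qed.

Lemma vcomb_ray (u g : vec) l r :
  (1 - l) *: u + l *: (u + r *: g) = u + (l * r) *: g.
Proof.
by rewrite scalerDr scalerA addrA -scalerDl subrK scale1r.
Qed.
End Basic.

Section Geo.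
Variables (R : realType) (n : nat).
Notation vec := 'rV[R]_n.
Notation gg L j := (nth (dgk R n) L j).1.
Notation kd L j := (nth (dgk R n) L j).2.
Variables (Pi Pj H : set vec) (Ci Cj : seq (constraint R n)) (Li Lj : seq (gk R n)).
Hypotheses (hPic : Pi = con Ci) (hPig : Pi = gen' Li) (hPjc : Pj = con Cj)
  (Pi0 : Pi !=set0) (Pj0 : Pj !=set0) (HPi : Pi `<=` H) (HPj : Pj `<=` H)
  (Hconv : forall u v t, H u -> H v -> 0 <= t -> t <= 1 -> H ((1 - t) *: u + t *: v)).
Hypothesis nc : forall j (c : constraint R n), (j < size Li)%N -> c \in Ci ->
  saturates (kd Li j) (gg Li j) c -> violates Pj c ->
  [/\ kd Li j = GRay -> is_ray_of Pj (gg Li j),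
      kd Li j = GClosure -> closure Pj (gg Li j),
      (kd Li j = GPoint -> ~~ cstrict c -> closure Pj (gg Li j)) &
      (cstrict c -> forall p, H p -> dotp (ca c) p = cb c -> Pj p)].

Lemma f1 x : closure Pj x -> clcon Cj x.
Proof.
move=> Hc c cC; apply: (closure_half _ Hc) => y; rewrite hPjc => Py.
by apply: (relW (st := cstrict c)); apply/satE/Py.
Qed.

Lemma f45 j c : (j < size Li)%N -> c \in Ci ->
  dotp (ca c) (gg Li j) <= ipc R (kd Li j) * cb c.
Proof.
move=> jN cC; have [p Pp] := Pi0.
case E: (kd Li j) => /=; rewrite /ipc ?mul0r ?mul1r.
- apply: (@ray_le0 _ (cstrict c) (dotp (ca c) p) _ (cb c)) => r r0.
  have : Pi (p + r *: gg Li j) by rewrite hPig; apply: gen'_ray => //; rewrite -hPig.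
  by rewrite hPic => /(_ c cC) /satE; rewrite dotpD dotpZ.
- have : Pi (gg Li j) by rewrite hPig; apply: gen'_pt.
  by rewrite hPic => /(_ c cC) /satE /relW.
- apply: (@clo_le _ (cstrict c) (dotp (ca c) p)) => t /andP[t0 t1].
  have : Pi ((1 - t) *: p + t *: gg Li j) by rewrite hPig; apply: gen'_clo => //; rewrite -hPig.
  by rewrite hPic => /(_ c cC) /satE; rewrite dotp_comb.
Qed.

Lemma f6 r c : is_ray_of Pj r -> c \in Cj -> dotp (ca c) r <= 0.
Proof.
move=> [_ Hr] cC; have [p Pp] := Pj0.
apply: (@ray_le0 _ (cstrict c) (dotp (ca c) p) _ (cb c)) => rho r0.
by have := Hr p rho Pp r0; rewrite hPjc => /(_ c cC) /satE; rewrite dotpD dotpZ.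
Qed.

Lemma lemA y c : Pi y -> c \in Ci -> ~~ cstrict c -> violates Pj c ->
  dotp (ca c) y = cb c -> clcon Cj y.
Proof.
move=> Py cC ns vc E c' c'C.
move: Py; rewrite hPig => -[z [H1 H2 H3 Ey]].
rewrite Ey; apply: gen'_bound => // j jN zj.
have sat := gen'_satgen H1 H3 (fun j jN => f45 jN cC) (etrans (congr1 _ (esym Ey)) E) jN zj.
have [hr hc hp _] := nc jN cC (proj2 (satE2 _ _ _) sat) vc.
case K: (kd Li j) => /=; rewrite /ipc ?mul0r ?mul1r.
- by apply: f6 c'C; apply: hr.
- by apply: f1 => //; apply: hp.
- by apply: f1 => //; apply: hc.
Qed.

Definition isray (k : gkind) : bool := if k is GRay then true else false.

Lemma supgen c : c \in Ci ->
  (forall j, (j < size Li)%N -> ~ saturates (kd Li j) (gg Li j) c) ->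
  exists2 M, M < cb c & forall x, Pi x -> dotp (ca c) x <= M.
Proof.
move=> cC Hns.
set idx := [seq j <- iota 0 (size Li) | ~~ isray (kd Li j)].
case: (eqVneq idx [::]) => I0.
  have [p] := Pi0; rewrite hPig => -[z [_ _ H3 _]].
  move: H3; rewrite big_seq big1 => [/eqP|j]; first by rewrite eq_sym oner_eq0.
  rewrite mem_index_iota => /andP[_ jN].
  case K: (kd Li j); rewrite /ipc ?mul0r //.
  - have : j \in idx by rewrite mem_filter K mem_iota add0n jN.
    by rewrite I0.
  - have : j \in idx by rewrite mem_filter K mem_iota add0n jN.
    by rewrite I0.
have [js jsI Hjs] := @argmax_seq _ _ _ (fun j => dotp (ca c) (gg Li j)) I0.
move: (jsI); rewrite mem_filter mem_iota add0n => /andP[nr jsN].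
exists (dotp (ca c) (gg Li js)).
  have := f45 jsN cC; have := Hns js jsN; rewrite satE2.
  by case: (kd Li js) nr => //= _; rewrite /ipc mul1r lt_neqAle => /eqP -> ->.
move=> x; rewrite hPig => -[z [H1 H2 H3 ->]].
apply: gen'_bound => // j jN _.
case K: (kd Li j) => /=; rewrite /ipc ?mul0r ?mul1r.
- by have := f45 jN cC; rewrite K /ipc mul0r.
- by apply: Hjs; rewrite mem_filter K mem_iota add0n jN.
- by apply: Hjs; rewrite mem_filter K mem_iota add0n jN.
Qed.
Lemma S1 u v t : Pi u -> Pj v -> 0 <= t -> t <= 1 ->
  (Pi `|` Pj) ((1 - t) *: u + t *: v).
Proof.
move=> Pu Pv t0 t1.
set w := fun t => (1 - t) *: u + t *: v.
have Hu : forall c, c \in Ci -> rel (cstrict c) (dotp (ca c) u) (cb c).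
  by move=> c cC; apply/satE; move: Pu; rewrite hPic; apply.
set V := [seq c <- Ci | ~~ satb v c].
have Vv : forall c, c \in Ci -> c \notin V -> rel (cstrict c) (dotp (ca c) v) (cb c).
  move=> c cC; rewrite mem_filter cC andbT negbK => /satbP; exact: (proj1 (satE _ _)).
have VAB : forall c, c \in V -> dotp (ca c) u < dotp (ca c) v.
  move=> c; rewrite mem_filter => /andP[/negP nv cC]; have := Hu c cC.
  move: nv; rewrite /satb /rel; case: cstrict => nv hu.
    by apply: lt_le_trans hu _; rewrite leNgt; apply/negP.
  by apply: le_lt_trans hu _; rewrite ltNge; apply/negP.
have Vviol : forall c, c \in V -> violates Pj c.
  move=> c; rewrite mem_filter => /andP[nv _]; exists v; split => //.
  by move/satbP; apply/negP.
case: (eqVneq V [::]) => V0.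
  apply: subsetUl; rewrite hPic; apply: con_conv => //.
  move=> c cC; apply/satE; apply: Vv => //; by rewrite V0.
set tc := fun c => (dotp (ca c) u - cb c) / (dotp (ca c) u - dotp (ca c) v).
have [cs csV Hcs] := @argmin_seq _ _ _ tc V0.
set s := tc cs.
have csC : cs \in Ci by move: csV; rewrite mem_filter => /andP[].
have cr := fun c t => @cross _ (dotp (ca c) u) (dotp (ca c) v) (cb c) t.
have s0 : 0 <= s.
  rewrite /s /tc ler_ndivlMr ?mul0r ?subr_lt0 ?VAB // subr_le0.
  exact: (relW (Hu cs csC)).
have s1 : s <= 1.
  have [_ _ E] := cr cs 0 (VAB cs csV).
  rewrite -/(tc cs) -/s in E.
  move: (csV); rewrite mem_filter => /andP[nv _].
  rewrite leNgt; apply/negP => s1.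
  have : satb v cs.
    rewrite /satb; have Hu' := Hu cs csC.
    have AB := VAB cs csV.
    have : dotp (ca cs) v < cb cs.
      have E2 : cb cs - dotp (ca cs) v = (s - 1) * (dotp (ca cs) v - dotp (ca cs) u) by rewrite -E; ring.
      rewrite -subr_gt0 E2 mulr_gt0 // subr_gt0 //.
    by case: cstrict => // /ltW.
  by rewrite (negbTE nv).
have lo : forall t', 0 <= t' -> t' < s -> Pi (w t').
  move=> t' t'0 t's; rewrite hPic => c cC; apply/satE; rewrite /w dotp_comb.
  case: (boolP (c \in V)) => cV.
    have [h1 h2 _] := cr c t' (VAB c cV).
    have lt : t' < tc c by apply: lt_le_trans t's (Hcs c cV).
    have := (proj2 h2 lt); rewrite /rel; case: cstrict => // /ltW //.
  apply: comb_sat; first by rewrite t'0 (ltW (lt_le_trans t's s1)).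
    exact: Hu.
  exact: Vv.
case: (ltP t s) => ts; first by apply: subsetUl; apply: lo.
have [_ _ Es] := cr cs s (VAB cs csV).
rewrite -/(tc cs) -/s in Es.
have Hws_Pj : Pj (w s) -> (Pi `|` Pj) (w t).
  move=> Pws; case: (eqVneq t s) => [->|tns]; first by apply: subsetUr.
  apply: subsetUr; rewrite hPjc => c cC; apply/satE; rewrite /w dotp_comb.
  have st : s < t by rewrite lt_neqAle eq_sym tns ts.
  apply: (aff_interp s0 st t1).
    by have := Pws; rewrite hPjc => /(_ c cC) /satE /relW; rewrite /w dotp_comb.
  by apply/satE; move: Pv; rewrite hPjc; apply.
case: (pselect (Pi (w s))) => Pws.
  have ns : ~~ cstrict cs.
    apply/negP => st; have := Pws; rewrite hPic => /(_ cs csC) /satE.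
    by rewrite /w dotp_comb Es /rel st ltxx.
  have cl := lemA Pws csC ns (Vviol cs csV) (etrans (dotp_comb _ _ _ _) Es).
  case: (eqVneq t s) => [->|tns]; first by apply: subsetUl.
  have st : s < t by rewrite lt_neqAle eq_sym tns ts.
  apply: subsetUr; rewrite hPjc => c cC; apply/satE; rewrite /w dotp_comb.
  apply: (aff_interp s0 st t1).
    by have := cl c cC; rewrite /w dotp_comb.
  by apply/satE; move: Pv; rewrite hPjc; apply.
have [c [cC nsat]] : exists c, c \in Ci /\ ~ sat_constraint (w s) c.
  apply: contrapT => h; apply: Pws; rewrite hPic => c cC.
  by apply: contrapT => h'; apply: h; exists c.
have cV : c \in V.
  rewrite mem_filter cC andbT; apply/negP => sv; apply: nsat.
  apply/satE; rewrite /w dotp_comb; apply: comb_sat; first by rewrite s0 s1.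
    exact: Hu.
  by apply/satE/satbP.
have [h1 h2 h3] := cr c s (VAB c cV).
have sc : s <= tc c := Hcs c cV.
have st : cstrict c.
  apply: contrapT => /negP ns; apply: nsat; apply/satE; rewrite /w dotp_comb.
  by rewrite /rel (negbTE ns); exact: (proj2 h1 sc).
have eqs : tc c = s.
  apply/eqP; rewrite eq_le sc andbT leNgt; apply/negP => lt; apply: nsat.
  by apply/satE; rewrite /w dotp_comb /rel st; exact: (proj2 h2 lt).
have Ews : dotp (ca c) (w s) = cb c.
  by rewrite /w dotp_comb -eqs; exact: h3.
have [j jN satj] : exists2 j, (j < size Li)%N & saturates (kd Li j) (gg Li j) c.
  apply: contrapT => hn.
  have [M Mb HM] := supgen cC (fun j jN sj => hn (ex_intro2 _ _ j jN sj)).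
  set A := dotp (ca c) u; set B := dotp (ca c) v.
  have AB : A < B := VAB c cV.
  have spos : 0 < s.
    rewrite lt_neqAle s0 andbT; apply/negP => /eqP s0'; apply: Pws.
    by rewrite /w -s0' subr0 scale1r scale0r addr0.
  set d := (cb c - M) / (2 * (B - A)).
  have d0 : 0 < d by rewrite divr_gt0 // ?subr_gt0 // mulr_gt0 // subr_gt0.
  set t' := Num.max 0 (s - d).
  have t'0 : 0 <= t' by rewrite le_max lexx.
  have t's : t' < s by rewrite gt_max spos /= ltrBlDr ltrDl.
  have := HM _ (lo t' t'0 t's); rewrite /w dotp_comb -/A -/B.
  have e1 : A + s * (B - A) = cb c.
    by rewrite -h3 -/(tc c) eqs /A /B; ring.
  have e2 : d * (B - A) = (cb c - M) / 2.
    by rewrite /d; field; rewrite subr_eq0 gt_eqF.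
  have e4 : (s - d) * (B - A) <= t' * (B - A).
    by apply: ler_wpM2r; [rewrite subr_ge0 ltW | rewrite le_max lexx orbT].
  have e5 : (1 - t') * A + t' * B = A + t' * (B - A) by ring.
  rewrite e5; lra.
have Pws' : Pj (w s).
  have [_ _ _ h4] := nc jN cC satj (Vviol c cV).
  exact: h4 st (w s) (Hconv (HPi Pu) (HPj Pv) s0 s1) Ews.
exact: Hws_Pj.
Qed.
Section S23.
Hypothesis Uconv : forall u v t, (Pi `|` Pj) u -> (Pi `|` Pj) v -> 0 <= t -> t <= 1 ->
  (Pi `|` Pj) ((1 - t) *: u + t *: v).

Lemma S2 u j r : Pj u -> (j < size Li)%N -> kd Li j = GRay -> 0 <= r ->
  (Pi `|` Pj) (u + r *: gg Li j).
Proof.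
move=> Pu jN E r0.
have Uu : (Pi `|` Pj) u by apply: subsetUr.
case: (pselect (is_ray_of Pj (gg Li j))) => [[_ Hr] | nr].
  by apply: subsetUr; apply: Hr.
have per : forall c, c \in Ci -> exists t0, forall rho, t0 <= rho ->
    sat_constraint (u + rho *: gg Li j) c.
  move=> c cC; have := f45 jN cC; rewrite E /ipc mul0r => hB.
  case: (pselect (violates Pj c)) => vc.
    have Bneq : dotp (ca c) (gg Li j) != 0.
      apply/negP => /eqP B0; apply: nr.
      have sj : saturates (kd Li j) (gg Li j) c by rewrite E.
      have [hr _ _ _] := nc jN cC sj vc.
      exact: hr.
    have Blt : dotp (ca c) (gg Li j) < 0 by rewrite lt_neqAle Bneq hB.
    have [r1 Hr1] := ray_far (dotp (ca c) u) (cb c) Blt.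
    exists r1 => rho hrho; apply/satE; rewrite dotpD dotpZ.
    by have := Hr1 rho hrho; rewrite /rel; case: cstrict => // /ltW.
  exists 0 => rho rho0; apply/satE; rewrite dotpD dotpZ.
  have hu : rel (cstrict c) (dotp (ca c) u) (cb c).
    apply/satE; apply: contrapT => h; apply: vc; exists u; split => //.
  have : dotp (ca c) u + rho * dotp (ca c) (gg Li j) <= dotp (ca c) u.
    by rewrite gerDl mulr_ge0_le0.
  move: hu; rewrite /rel; case: cstrict => h1 h2; [exact: le_lt_trans h2 h1 | exact: le_trans h2 h1].
have [r1 Hr1] := ev_all per.
set r2 := Num.max r1 1.
have P1 : Pi (u + r2 *: gg Li j).
  by rewrite hPic => c cC; apply: Hr1 => //; rewrite le_max lexx.
case: (leP r2 r) => hr.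
  apply: subsetUl; rewrite hPic => c cC; apply: Hr1 => //.
  by apply: le_trans hr; rewrite le_max lexx.
have r2pos : 0 < r2 by rewrite lt_max ltr01 orbT.
have := Uconv Uu (inUl _ P1) (divr_ge0 r0 (ltW r2pos)) _.
rewrite vcomb_ray divfK ?lt0r_neq0 //; apply.
by rewrite ler_pdivrMr // mul1r ltW.
Qed.

Lemma S3 u j t : Pj u -> (j < size Li)%N -> kd Li j = GClosure -> 0 <= t -> t < 1 ->
  (Pi `|` Pj) ((1 - t) *: u + t *: gg Li j).
Proof.
move=> Pu jN E t0 t1.
have Uu : (Pi `|` Pj) u by apply: subsetUr.
case: (pselect (clcon Cj (gg Li j))) => cg.
  by apply: subsetUr; rewrite hPjc; apply: con_clo => //; rewrite -hPjc.
have ncl : ~ closure Pj (gg Li j) by move/f1.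
have per : forall c, c \in Ci -> exists2 t0, t0 < 1 & forall t', t0 <= t' -> t' < 1 ->
    sat_constraint ((1 - t') *: u + t' *: gg Li j) c.
  move=> c cC; have := f45 jN cC; rewrite E /ipc mul1r => hC.
  have hu : violates Pj c \/ rel (cstrict c) (dotp (ca c) u) (cb c).
    case: (pselect (violates Pj c)) => vc; [by left | right].
    apply/satE; apply: contrapT => h; apply: vc; exists u; split => //.
  case: hu => [vc|hu].
    have Cneq : dotp (ca c) (gg Li j) != cb c.
      apply/negP => /eqP C0; apply: ncl.
      have sj : saturates (kd Li j) (gg Li j) c by rewrite E.
      have [_ hc _ _] := nc jN cC sj vc.
      exact: hc.
    have Clt : dotp (ca c) (gg Li j) < cb c by rewrite lt_neqAle Cneq hC.
    have [t2 t21 Ht2] := clo_near (dotp (ca c) u) Clt.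
    exists t2 => // t' h1 h2; apply/satE; rewrite dotp_comb.
    by have := Ht2 t' h1 h2; rewrite /rel; case: cstrict => // /ltW.
  exists 0 => // t' h1 h2; apply/satE; rewrite dotp_comb.
  have -> : (1 - t') * dotp (ca c) u + t' * dotp (ca c) (gg Li j) =
     (1 - (1 - t')) * dotp (ca c) (gg Li j) + (1 - t') * dotp (ca c) u by ring.
  apply: comb_clo => //.
  by rewrite subr_gt0 h2 /= lerBlDr lerDl.
have [t2 t21 Ht2] := ev_all_lt per.
set t3 := Num.max t2 0.
have t31 : t3 < 1 by rewrite gt_max t21 ltr01.
have P1 : Pi ((1 - t3) *: u + t3 *: gg Li j).
  by rewrite hPic => c cC; apply: Ht2 => //; rewrite le_max lexx.
case: (leP t3 t) => ht.
  apply: subsetUl; rewrite hPic => c cC; apply: Ht2 => //.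
  by apply: le_trans ht; rewrite le_max lexx.
have t3pos : 0 < t3 by apply: le_lt_trans ht.
have := Uconv Uu (inUl _ P1) (divr_ge0 t0 (ltW t3pos)) _.
rewrite vcomb divfK ?lt0r_neq0 //; apply.
by rewrite ler_pdivrMr // mul1r ltW.
Qed.
End S23.
End Geo.
Section Easy.
Variables (R : realType) (n : nat).
Notation vec := 'rV[R]_n.
Notation gg L j := (nth (dgk R n) L j).1.
Notation kd L j := (nth (dgk R n) L j).2.

Lemma phull_sym (A B : set vec) : poly_hull A B = poly_hull B A.
Proof.
by apply/seteqP; split => x Hx Q NQ sub; apply: Hx => //; rewrite setUC.
Qed.

Lemma phull_conv (A B : set vec) u v t : poly_hull A B u -> poly_hull A B v ->
  0 <= t -> t <= 1 -> poly_hull A B ((1 - t) *: u + t *: v).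
Proof.
move=> hu hv t0 t1 Q [C [wfC ->]] sub; apply: con_conv => //;
  [apply: (hu (con C)) | apply: (hv (con C))] => //; by exists C.
Qed.

Lemma phull_l (A B : set vec) x : A x -> poly_hull A B x.
Proof. by move=> Ax Q _ sub; apply: sub; left. Qed.
Lemma phull_r (A B : set vec) x : B x -> poly_hull A B x.
Proof. by move=> Bx Q _ sub; apply: sub; right. Qed.

Variables (Pi Pj : set vec) (Ci Cj : seq (constraint R n)) (Gi : gensys R n).
Hypotheses (hPic : Pi = con Ci) (hPig : Pi = gen' (tolist Gi)) (hPjc : Pj = con Cj)
  (Pi0 : Pi !=set0) (wfi : wf_gensys Gi).
Notation Li := (tolist Gi).

Lemma phull_clo j q t : (j < size Li)%N -> kd Li j = GClosure -> Pj q -> 0 < t -> t <= 1 ->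
  poly_hull Pi Pj ((1 - t) *: gg Li j + t *: q).
Proof.
move=> jN E Pq t0 t1 Q [C [_ ->]] sub c cC; apply/satE; rewrite dotp_comb.
have [p Pp] := Pi0.
apply: comb_clo; last by rewrite t0 t1.
  apply: (@clo_le _ (cstrict c) (dotp (ca c) p)) => s /andP[s0 s1].
  have : Pi ((1 - s) *: p + s *: gg Li j) by rewrite hPig; apply: gen'_clo => //; rewrite -hPig.
  by move=> /(fun h => sub _ (or_introl h)) /(_ c cC) /satE; rewrite dotp_comb.
by apply/satE; apply: (sub q (or_intror Pq)).
Qed.

Lemma phull_ray j q r : (j < size Li)%N -> kd Li j = GRay -> Pj q -> 0 <= r ->
  poly_hull Pi Pj (q + r *: gg Li j).
Proof.
move=> jN E Pq r0 Q [C [_ ->]] sub c cC; apply/satE; rewrite dotpD dotpZ.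
have [p Pp] := Pi0.
have hB : dotp (ca c) (gg Li j) <= 0.
  apply: (@ray_le0 _ (cstrict c) (dotp (ca c) p) _ (cb c)) => rho rho0.
  have : Pi (p + rho *: gg Li j) by rewrite hPig; apply: gen'_ray => //; rewrite -hPig.
  by move=> /(fun h => sub _ (or_introl h)) /(_ c cC) /satE; rewrite dotpD dotpZ.
have hq : rel (cstrict c) (dotp (ca c) q) (cb c) by apply/satE; apply: (sub q (or_intror Pq)).
have : dotp (ca c) q + r * dotp (ca c) (gg Li j) <= dotp (ca c) q.
  by rewrite gerDl mulr_ge0_le0.
move: hq; rewrite /rel; case: cstrict => h1 h2; [exact: le_lt_trans h2 h1 | exact: le_trans h2 h1].
Qed.

Lemma closure_case (H : set vec) (g q : vec) (b : constraint R n) : b \in Ci ->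
  dotp (ca b) g = cb b -> Pj q -> ~ sat_constraint q b -> ~ closure Pj g ->
  (forall t, 0 < t -> t <= 1 -> H ((1 - t) *: g + t *: q)) ->
  exists x, H x /\ ~ (Pi `|` Pj) x.
Proof.
move=> bC gb Pq nq ncl Hseg.
have [e e0 He] := closure_ballP ncl.
set d := `|g - q| + 1.
have d0 : 0 < d by rewrite /d ltr_wpDl.
set t := Num.min 1 (e / (2 * d)).
have t0 : 0 < t by rewrite lt_min ltr01 divr_gt0 // mulr_gt0.
have t1 : t <= 1 by rewrite ge_min lexx.
exists ((1 - t) *: g + t *: q); split; first exact: Hseg.
have nq' : ~ rel (cstrict b) (dotp (ca b) q) (cb b) by move=> h; apply: nq; apply/satE.
case=> [Pix|Pjx].
  have := Pix; rewrite hPic => /(_ b bC) /satE; rewrite dotp_comb gb.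
  move: nq'; rewrite /rel; case: cstrict => /negP h1 h2.
    by move: h1; rewrite -leNgt => h1; nra.
  by move: h1; rewrite -ltNge => h1; nra.
apply: (He _ _ Pjx).
have -> : g - ((1 - t) *: g + t *: q) = t *: (g - q).
  by rewrite scalerBr scalerBl scale1r opprD opprB addrA addrCA subrr addr0.
rewrite normrZ gtr0_norm //.
have h1 : t <= e / (2 * d) by rewrite ge_min lexx orbT.
have h2 : `|g - q| <= d by rewrite /d lerDl.
have h3 : t * `|g - q| <= e / (2 * d) * d.
  by apply: ler_pM => //; apply: ltW.
have h4 : e / (2 * d) * d = e / 2 by field; rewrite lt0r_neq0.
lra.
Qed.
Lemma easy (H : set vec) :
  (forall j q t, (j < size Li)%N -> kd Li j = GClosure -> Pj q -> 0 < t -> t <= 1 ->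
     H ((1 - t) *: gg Li j + t *: q)) ->
  (forall j q r, (j < size Li)%N -> kd Li j = GRay -> Pj q -> 0 <= r ->
     H (q + r *: gg Li j)) ->
  (forall u v t, H u -> H v -> 0 <= t -> t <= 1 -> H ((1 - t) *: u + t *: v)) ->
  Pi `<=` H -> Pj `<=` H ->
  hull_cond Pi Ci Gi Pj H -> exists x, H x /\ ~ (Pi `|` Pj) x.
Proof.
move=> Hclo Hray Hcv HPi HPj [k [g [b [ing bC sat [q [Pq nq]] cases]]]].
have [j jN Ej] := tolist_in ing.
have gE : gg Li j = g by rewrite Ej.
have kE : kd Li j = k by rewrite Ej.
case: cases => [[[kR|kC] ns]|[kP [nsb ncl]]|[stb [p [Hp [nPj sp]]]]].
- rewrite kR in ing sat ns kE; move: ns sat => /= ns sat.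
  have g0 : g != 0.
    by apply/negP => /eqP g0; move: wfi; rewrite /wf_gensys -g0; move: ing => /= ->.
  have [p [rho [Pp [rho0 nP]]]] : exists p rho, Pj p /\ 0 <= rho /\ ~ Pj (p + rho *: g).
    apply: contrapT => h; apply: ns; split => // p' rho' Pp' r0'.
    by apply: contrapT => h'; apply: h; exists p', rho'.
  have [c [cC nsc]] : exists c, c \in Cj /\ ~ sat_constraint (p + rho *: g) c.
    apply: contrapT => h; apply: nP; rewrite hPjc => c cC.
    by apply: contrapT => h'; apply: h; exists c.
  have hp : rel (cstrict c) (dotp (ca c) p) (cb c) by apply/satE; move: Pp; rewrite hPjc; apply.
  have Gpos : 0 < dotp (ca c) g.
    rewrite ltNge; apply/negP => hle; apply: nsc; apply/satE; rewrite dotpD dotpZ.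
    have : dotp (ca c) p + rho * dotp (ca c) g <= dotp (ca c) p.
      by rewrite gerDl mulr_ge0_le0.
    move: hp; rewrite /rel; case: cstrict => h1 h2; [exact: le_lt_trans h2 h1 | exact: le_trans h2 h1].
  have [r r0 hr] := ray_far_up (dotp (ca c) q) (cb c) Gpos.
  exists (q + r *: g); split; first by rewrite -gE; apply: Hray => //; rewrite kE.
  case=> [Pix|Pjx].
    apply: nq; move: Pix; rewrite hPic => /(_ b bC) /satE; rewrite dotpD dotpZ sat mulr0 addr0.
    by move/satE.
  move: Pjx; rewrite hPjc => /(_ c cC) /satE /relW; rewrite dotpD dotpZ.
  by move=> h; move: hr; rewrite ltNge h.
- rewrite kC in ing sat ns kE; apply: (closure_case bC _ Pq nq ns) => //.
  by move=> t t0 t1; rewrite -gE; apply: Hclo => //; rewrite kE.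
- rewrite kP in ing sat kE; apply: (closure_case bC _ Pq nq ncl) => //.
  move=> t t0 t1; apply: Hcv; [|exact: HPj|exact: ltW|done].
  by apply: HPi; rewrite hPig -gE; apply: gen'_pt => //; rewrite kE.
exists p; split => //; case=> [Pip|//].
by move: Pip; rewrite hPic => /(_ b bC) /satE; rewrite sp /rel stb ltxx.
Qed.
End Easy.
Section Final.
Variables (R : realType) (n : nat).
Notation vec := 'rV[R]_n.
Notation gg L j := (nth (dgk R n) L j).1.
Notation kd L j := (nth (dgk R n) L j).2.

Lemma mkNC (Pi Pj H : set vec) (Ci : seq (constraint R n)) (Gi : gensys R n) :
  ~ hull_cond Pi Ci Gi Pj H ->
  forall j (c : constraint R n), (j < size (tolist Gi))%N -> c \in Ci ->
  saturates (kd (tolist Gi) j) (gg (tolist Gi) j) c -> violates Pj c ->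
  [/\ kd (tolist Gi) j = GRay -> is_ray_of Pj (gg (tolist Gi) j),
      kd (tolist Gi) j = GClosure -> closure Pj (gg (tolist Gi) j),
      (kd (tolist Gi) j = GPoint -> ~~ cstrict c -> closure Pj (gg (tolist Gi) j)) &
      (cstrict c -> forall p, H p -> dotp (ca c) p = cb c -> Pj p)].
Proof.
move=> Hc j c jN cC sj vc.
have ing := in_tolist jN.
split.
- move=> kR; apply: contrapT => nr; apply: Hc.
  exists (kd (tolist Gi) j), (gg (tolist Gi) j), c; split => //.
  by apply: Or31; split; [left | rewrite kR].
- move=> kC; apply: contrapT => nr; apply: Hc.
  exists (kd (tolist Gi) j), (gg (tolist Gi) j), c; split => //.
  by apply: Or31; split; [right | rewrite kC].
- move=> kP ns; apply: contrapT => nr; apply: Hc.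
  exists (kd (tolist Gi) j), (gg (tolist Gi) j), c; split => //.
  by apply: Or32.
- move=> st p Hp Ep; apply: contrapT => np; apply: Hc.
  exists (kd (tolist Gi) j), (gg (tolist Gi) j), c; split => //.
  by apply: Or33; split => //; exists p.
Qed.
End Final.

Unset Implicit Arguments.
Unset Strict Implicit.

Theorem theorem4 (R : realType) (n : nat)
  (P1 P2 : set 'rV[R]_n) (C1 C2 : seq (constraint R n)) (G1 G2 : gensys R n) :
  (forall c, c \in C1 -> wf_constraint c) ->
  (forall c, c \in C2 -> wf_constraint c) ->
  wf_gensys G1 -> wf_gensys G2 ->
  P1 = con C1 -> P1 = gen G1 ->
  P2 = con C2 -> P2 = gen G2 ->
  P1 !=set0 -> P2 !=set0 ->
  (poly_hull P1 P2 <> P1 `|` P2 <->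
   hull_cond P1 C1 G1 P2 (poly_hull P1 P2) \/
   hull_cond P2 C2 G2 P1 (poly_hull P1 P2)).
Proof.
move=> wf1 wf2 wg1 wg2 h1c h1g h2c h2g P10 P20.
have h1g' : P1 = gen' (tolist G1) by rewrite h1g gen_gen'.
have h2g' : P2 = gen' (tolist G2) by rewrite h2g gen_gen'.
set H := poly_hull P1 P2.
have HP1 : P1 `<=` H by move=> x; apply: phull_l.
have HP2 : P2 `<=` H by move=> x; apply: phull_r.
have Hcv : forall u v t, H u -> H v -> 0 <= t -> t <= 1 -> H ((1 - t) *: u + t *: v).
  by move=> u v t hu hv t0 t1; apply: phull_conv.
have HS : H = poly_hull P2 P1 by rewrite /H phull_sym.
split; last first.
  case=> hc.
    have [x [Hx nU]] := easy h1c h1g' h2c wg1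
      (fun j q t jN E Pq t0 t1 => phull_clo h1g' P10 jN E Pq t0 t1)
      (fun j q r jN E Pq r0 => phull_ray h1g' P10 jN E Pq r0) Hcv HP1 HP2 hc.
    by move=> E; apply: nU; rewrite -E.
  have Hcl : forall j q t, (j < size (tolist G2))%N -> (nth (dgk R n) (tolist G2) j).2 = GClosure -> P1 q ->
      0 < t -> t <= 1 -> H ((1 - t) *: (nth (dgk R n) (tolist G2) j).1 + t *: q).
    by move=> j q t jN E Pq t0 t1; rewrite HS; apply: phull_clo.
  have Hry : forall j q r, (j < size (tolist G2))%N -> (nth (dgk R n) (tolist G2) j).2 = GRay -> P1 q ->
      0 <= r -> H (q + r *: (nth (dgk R n) (tolist G2) j).1).
    by move=> j q r jN E Pq r0; rewrite HS; apply: phull_ray.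
  have [x [Hx nU]] := easy h2c h2g' h1c wg2 Hcl Hry Hcv HP2 HP1 hc.
  by move=> E; apply: nU; rewrite setUC -E.
move=> Hne; apply: contrapT => Hc; apply: Hne.
have nc1 := mkNC (fun h => Hc (or_introl h)).
have nc2 := mkNC (fun h => Hc (or_intror h)).
have S1a := S1 h1c h1g' h2c P10 P20 HP1 HP2 Hcv nc1.
have S1b := S1 h2c h2g' h1c P20 P10 HP2 HP1 Hcv nc2.
have Uconv : forall u v t, (P1 `|` P2) u -> (P1 `|` P2) v -> 0 <= t -> t <= 1 ->
    (P1 `|` P2) ((1 - t) *: u + t *: v).
  move=> u v t [Pu|Pu] [Pv|Pv] t0 t1.
  - by apply: inUl; rewrite h1c; apply: con_conv; rewrite -?h1c.
  - exact: S1a.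
  - by rewrite setUC; apply: S1b.
  - by apply: inUr; rewrite h2c; apply: con_conv; rewrite -?h2c.
have Uconv' : forall u v t, (P2 `|` P1) u -> (P2 `|` P1) v -> 0 <= t -> t <= 1 ->
    (P2 `|` P1) ((1 - t) *: u + t *: v).
  by rewrite setUC.
set L := tolist G1 ++ tolist G2.
have sub1 : P1 `|` P2 `<=` gen' L.
  by move=> x [Px|Px]; [apply: gen'_cat_l; rewrite -h1g' | apply: gen'_cat_r; rewrite -h2g'].
have NL : is_NNC (gen' L).
  by apply: gen'_NNC; have [x Px] := P10; exists x; apply: sub1; left.
have sub2 : gen' L `<=` P1 `|` P2.
  apply: gen'_ind.
  - exact: Uconv.
  - move=> i u r iN; rewrite /L nth_cat; case: ifP => lt kR Uu r0.
      case: Uu => Pu; last exact: (S2 h1c h1g' P10 nc1 Uconv Pu lt kR r0).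
      by apply: inUl; rewrite h1g'; apply: gen'_ray => //; rewrite -h1g'.
    have lt2 : (i - size (tolist G1) < size (tolist G2))%N.
      by move: iN (negbT lt); rewrite size_cat -leqNgt => a b; rewrite ltn_subLR.
    case: Uu => Pu; first by rewrite setUC; exact: (S2 h2c h2g' P20 nc2 Uconv' Pu lt2 kR r0).
    by apply: inUr; rewrite h2g'; apply: gen'_ray => //; rewrite -h2g'.
  - move=> i u t iN; rewrite /L nth_cat; case: ifP => lt kC Uu t0 t1.
      case: Uu => Pu; last exact: (S3 h1c h1g' h2c P10 nc1 Uconv Pu lt kC t0 t1).
      by apply: inUl; rewrite h1g'; apply: gen'_clo => //; rewrite -h1g'.
    have lt2 : (i - size (tolist G1) < size (tolist G2))%N.
      by move: iN (negbT lt); rewrite size_cat -leqNgt => a b; rewrite ltn_subLR.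
    case: Uu => Pu; first by rewrite setUC; exact: (S3 h2c h2g' h1c P20 nc2 Uconv' Pu lt2 kC t0 t1).
    by apply: inUr; rewrite h2g'; apply: gen'_clo => //; rewrite -h2g'.
  - move=> i iN; rewrite /L nth_cat; case: ifP => lt kP.
      by apply: inUl; rewrite h1g'; apply: gen'_pt.
    have lt2 : (i - size (tolist G1) < size (tolist G2))%N.
      by move: iN (negbT lt); rewrite size_cat -leqNgt => a b; rewrite ltn_subLR.
    by apply: inUr; rewrite h2g'; apply: gen'_pt.
apply/seteqP; split; last by move=> x [Px|Px]; [apply: HP1 | apply: HP2].
by move=> x Hx; apply: sub2; apply: Hx.
Qed.
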